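(* Let $q\ge1$, $\delta>0$, $\sigma\ne 0$ real, and real $a_k,b_k$ with $b_k>a_k>0$ for $k=1,\dots,q$. Define, for $x>-1$, $$ f(x)=\frac{{}_{q+1}F_q\left(\sigma,a_1+\delta,\dots,a_q+\delta;b_1+\delta,\dots,b_q+\delta;-x\right)}{{}_{q+1}F_q\left(\sigma,a_1,\dots,a_q;b_1,\dots,b_q;-x\right)}. $$ Then $f$ is monotone decreasing on $(-1,\infty)$ if $\sigma>0$ and monotone increasing on $(-1,\infty)$ if $\sigma<0$.
   Context: ${}_{q+1}F_q(\alpha_1,\dots,\alpha_{q+1};\beta_1,\dots,\beta_q;z)=\sum_{n\ge0}\frac{(\alpha_1)_n\cdots(\alpha_{q+1})_n}{(\beta_1)_n\cdots(\beta_q)_n n!}z^n$ with $(a)_n=a(a+1)\cdots(a+n-1)$, analytically continued to $\mathbb C\setminus[1,\infty)$ (so the functions above are defined for $x>-1$). *)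

(* Defs.v *)
From Stdlib Require Import Reals ClassicalEpsilon.
From Coquelicot Require Import Coquelicot.
Open Scope R_scope.

Fixpoint poch (a : R) (n : nat) : R :=
  match n with
  | O => 1
  | S m => poch a m * (a + INR m)
  end.

Fixpoint prodR (q : nat) (g : nat -> R) : R :=
  match q with
  | O => 1
  | S m => prodR m g * g m
  end.

(* n-th coefficient of  q+1Fq(s, a_0..a_{q-1}; b_0..b_{q-1}; z). *)
Definition hyp_coef (q : nat) (s : R) (a b : nat -> R) (n : nat) : R :=
  poch s n * prodR q (fun k => poch (a k) n / poch (b k) n) / INR (Factorial.fact n).

(* g is the analytic continuation of the hypergeometric series to the real
   part (-oo,1) of C \ [1,oo): g equals the series on (-1,1) and g is real
   analytic on (-oo,1) (locally a convergent power series). *)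
Definition is_hyp_continuation (q : nat) (s : R) (a b : nat -> R)
    (g : R -> R) : Prop :=
  (forall z, -1 < z < 1 ->
     is_series (fun n => hyp_coef q s a b n * z ^ n) (g z)) /\
  (forall z0, z0 < 1 ->
     exists r, 0 < r /\ exists c : nat -> R,
       forall z, Rabs (z - z0) < r -> z < 1 ->
         is_series (fun n => c n * (z - z0) ^ n) (g z)).

(* The (analytically continued) function q+1Fq(s, a; b; .) on (-oo,1):
   a continuation chosen by the description operator (unique on (-oo,1)). *)
Definition hypF (q : nat) (s : R) (a b : nat -> R) : R -> R :=
  epsilon (inhabits (fun _ : R => 0)) (is_hyp_continuation q s a b).

(* Main.v *)
Require Import Defs.
From Stdlib Require Import Reals.
From Stdlib Require Import Lra Lia ClassicalEpsilon Classical Factorial.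
From Coquelicot Require Import Coquelicot.
Open Scope R_scope.


Definition bc (s : R) (n : nat) : R := poch s n / INR (fact n).

Lemma bc_S s n : bc s (S n) = bc s n * (s + INR n) / INR (S n).
Proof.
  unfold bc; simpl poch. rewrite fact_simpl, mult_INR.
  assert (INR (fact n) <> 0) by (apply not_0_INR, fact_neq_0).
  assert (INR (S n) <> 0) by (apply not_0_INR; lia).
  field; auto.
Qed.

Lemma poch_pos s n : 0 < s -> 0 < poch s n.
Proof.
  intros Hs; induction n; simpl; [lra|].
  apply Rmult_lt_0_compat; auto. pose proof (pos_INR n); lra.
Qed.

Lemma poch_abs_le s n : Rabs (poch s n) <= poch (Rabs s + 1) n.
Proof.
  induction n; simpl.
  - rewrite Rabs_R1; lra.
  - rewrite Rabs_mult. apply Rmult_le_compat; try apply Rabs_pos; auto.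
    pose proof (Rabs_triang s (INR n)). rewrite (Rabs_right (INR n)) in H
      by (apply Rle_ge, pos_INR). lra.
Qed.

Lemma term_le_series (b : nat -> R) l n :
  (forall k, 0 <= b k) -> is_series b l -> b n <= l.
Proof.
  intros Hb Hs.
  assert (Hm : forall m, b n <= sum_n b (m + n)).
  { induction m.
    - simpl. destruct n. rewrite sum_O; lra.
      rewrite sum_Sn. unfold plus; simpl.
      assert (0 <= sum_n b n).
      { clear Hs. induction n. rewrite sum_O; auto. rewrite sum_Sn; unfold plus; simpl.
        specialize (Hb (S n)); lra. }
      lra.
    - replace (S m + n)%nat with (S (m + n)) by lia.
      rewrite sum_Sn; unfold plus; simpl. specialize (Hb (S (m+n))); lra. }
  change (is_lim_seq (sum_n b) l) in Hs.
  apply is_lim_seq_incr_n with (N := n) in Hs.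
  assert (Rbar_le (b n) l).
  { apply (is_lim_seq_le (fun _ => b n) (fun m => sum_n b (m + n))); auto.
    apply is_lim_seq_const. }
  simpl in H; auto.
Qed.

Lemma bc_abs_le s n : Rabs (bc s n) <= bc (Rabs s + 1) n.
Proof.
  unfold bc. rewrite Rabs_div. 2: apply not_0_INR, fact_neq_0.
  rewrite (Rabs_right (INR (fact n))) by (apply Rle_ge, pos_INR).
  apply Rmult_le_compat_r. left; apply Rinv_0_lt_compat, lt_0_INR, lt_O_fact.
  apply poch_abs_le.
Qed.

Lemma bc_pos s n : 0 < s -> 0 < bc s n.
Proof.
  intros; unfold bc. apply Rdiv_lt_0_compat. apply poch_pos; auto.
  apply lt_0_INR, lt_O_fact.
Qed.

Lemma lim_inv_n1 : is_lim_seq (fun n => / (INR n + 1)) 0.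
Proof.
  replace (Finite 0) with (Rbar_inv p_infty) by reflexivity.
  apply is_lim_seq_inv.
  - eapply is_lim_seq_plus. apply is_lim_seq_INR. apply is_lim_seq_const.
    reflexivity.
  - discriminate.
Qed.

Lemma CV_radius_bc_pos s : 0 < s -> CV_radius (bc s) = 1.
Proof.
  intros Hs. replace 1 with (/ 1) by field.
  apply CV_radius_finite_DAlembert; [|lra|].
  - intros n; pose proof (bc_pos s n Hs); lra.
  - apply is_lim_seq_ext with (u := fun n => 1 + (s - 1) / (INR n + 1)).
    + intros n. rewrite bc_S. pose proof (bc_pos s n Hs). rewrite S_INR.
      pose proof (pos_INR n).
      replace (bc s n * (s + INR n) / (INR n + 1) / bc s n) with ((s + INR n) / (INR n + 1))
        by (field; split; lra).
      rewrite Rabs_right. field. lra.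
      apply Rle_ge. apply Rdiv_le_0_compat; lra.
    + eapply is_lim_seq_plus. apply is_lim_seq_const.
      apply is_lim_seq_ext with (u := fun n => (s - 1) * / (INR n + 1)).
      intros; unfold Rdiv; auto.
      apply is_lim_seq_scal_l. apply lim_inv_n1.
      simpl. unfold is_Rbar_plus. simpl. f_equal. f_equal. ring.
Qed.

Lemma bc_abs_series s rho : Rabs rho < 1 ->
  ex_series (fun n => Rabs (bc s n * rho ^ n)).
Proof.
  intros Hr.
  assert (H1 : ex_series (fun n => Rabs (bc (Rabs s + 1) n * rho ^ n))).
  { apply CV_disk_inside. rewrite CV_radius_bc_pos.
    simpl; auto. pose proof (Rabs_pos s); lra. }
  apply (@ex_series_le R_AbsRing R_CompleteNormedModule) with (2 := H1).
  intros n. change (Rabs (Rabs (bc s n * rho ^ n)) <= Rabs (bc (Rabs s + 1) n * rho ^ n)).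
  rewrite Rabs_Rabsolu.
  rewrite !Rabs_mult. apply Rmult_le_compat_r. apply Rabs_pos.
  eapply Rle_trans. apply bc_abs_le. apply Req_le. rewrite (Rabs_right (bc _ n)); auto.
  apply Rle_ge; left; apply bc_pos. pose proof (Rabs_pos s); lra.
Qed.

Lemma bc_radius s u : Rabs u < 1 -> Rbar_lt (Rabs u) (CV_radius (bc s)).
Proof.
  intros Hu.
  set (r := (Rabs u + 1) / 2).
  assert (Hr : Rabs r < 1).
  { unfold r. pose proof (Rabs_pos u). rewrite Rabs_right; lra. }
  destruct (bc_abs_series s r Hr) as [M HM].
  assert (Hle : Rbar_le r (CV_radius (bc s))).
  { destruct (CV_radius_bounded (bc s)) as [Hub _].
    apply Hub. exists M. intros n.
    apply (term_le_series (fun n => Rabs (bc s n * r ^ n))); auto.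
    intros; apply Rabs_pos. }
  destruct (CV_radius (bc s)) as [c| |]; simpl in *; auto.
  unfold r in Hle. pose proof (Rabs_pos u). lra.
Qed.

Lemma bc_deriv_eq s n : PS_derive (bc s) n = bc s n * (s + INR n).
Proof.
  unfold PS_derive. rewrite bc_S. assert (INR (S n) <> 0) by (apply not_0_INR; lia).
  field; auto.
Qed.

Lemma bc_ode s u : Rabs u < 1 ->
  PSeries (PS_derive (bc s)) u * (1 - u) = s * PSeries (bc s) u.
Proof.
  intros Hu.
  set (d := PS_derive (bc s)).
  assert (Hd : ex_pseries d u).
  { apply CV_radius_inside. unfold d; rewrite CV_radius_derive. apply bc_radius; auto. }
  assert (Hd1 : ex_pseries (PS_incr_1 d) u).
  { apply CV_radius_inside. rewrite CV_radius_incr_1. unfold d; rewrite CV_radius_derive.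
    apply bc_radius; auto. }
  replace (PSeries d u * (1 - u)) with (PSeries d u - u * PSeries d u) by ring.
  rewrite <- PSeries_incr_1. rewrite <- PSeries_minus; auto.
  rewrite <- PSeries_scal. apply PSeries_ext.
  intros n. unfold PS_minus, PS_scal, PS_incr_1. destruct n.
  - unfold d; rewrite bc_deriv_eq. simpl. unfold scal, minus, plus, opp, mult; simpl.
    unfold mult; simpl. unfold zero; simpl. ring.
  - unfold d; rewrite !bc_deriv_eq. rewrite S_INR.
    unfold scal, minus, plus, opp, mult; simpl. unfold mult; simpl.
    rewrite bc_S. rewrite S_INR. assert (INR n + 1 <> 0) by (pose proof (pos_INR n); lra).
    field; auto.
Qed.

Lemma binomial_series s u : Rabs u < 1 ->
  is_series (fun n => bc s n * u ^ n) (Rpower (1 - u) (- s)).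
Proof.
  intros Hu.
  assert (Hex : ex_pseries (bc s) u) by (apply CV_radius_inside, bc_radius; auto).
  assert (HS : PSeries (bc s) u = Rpower (1 - u) (- s)).
  { set (h := fun v => PSeries (bc s) v * Rpower (1 - v) s).
    assert (Hder : forall v, Rabs v < 1 -> is_derive h v 0).
    { intros v Hv. unfold h.
      assert (Hv1 : 0 < 1 - v) by (apply Rabs_def2 in Hv; lra).
      assert (HP : is_derive (fun v => Rpower (1 - v) s) v
                      (s * Rpower (1 - v) (s - 1) * (-1))).
      { replace (s * Rpower (1 - v) (s - 1) * (-1)) with
          (scal (-1) (s * Rpower (1 - v) (s - 1))).
        2:{ unfold scal; simpl; unfold mult; simpl; ring. }
        apply (is_derive_comp (fun w => Rpower w s) (fun v => 1 - v)).
        apply is_derive_Reals. apply derivable_pt_lim_power; auto.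
        auto_derive; auto. }
      eapply is_derive_ext_loc. apply filter_forall. intros; reflexivity.
      replace 0 with (PSeries (PS_derive (bc s)) v * Rpower (1 - v) s +
                      PSeries (bc s) v * (s * Rpower (1 - v) (s - 1) * -1)).
      apply (is_derive_mult (fun v => PSeries (bc s) v) (fun v => Rpower (1 - v) s)).
      apply is_derive_PSeries. apply bc_radius; auto. auto.
      intros; unfold mult; simpl; apply Rmult_comm.
      replace (Rpower (1 - v) s) with ((1 - v) * Rpower (1 - v) (s - 1)).
      2:{ rewrite <- (Rpower_1 (1 - v)) at 1 by auto. rewrite <- Rpower_plus. f_equal; ring. }
      transitivity (Rpower (1 - v) (s - 1) *
        (PSeries (PS_derive (bc s)) v * (1 - v) - s * PSeries (bc s) v)); [ring|].
      rewrite (bc_ode s v Hv). ring. }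
    assert (Hh : h u = h 0).
    { destruct (MVT_gen h 0 u (fun _ => 0)) as [c [Hc Hc2]].
      - intros x Hx. apply Hder. apply Rabs_def1.
        + destruct (Rle_dec 0 u) as [Hle|Hle].
          * rewrite Rmax_right in Hx by auto. apply Rabs_def2 in Hu. lra.
          * rewrite Rmax_left in Hx by lra. rewrite Rmin_right in Hx by lra. lra.
        + destruct (Rle_dec 0 u) as [Hle|Hle].
          * rewrite Rmin_left in Hx by auto. rewrite Rmax_right in Hx by auto. lra.
          * rewrite Rmin_right in Hx by lra. apply Rabs_def2 in Hu. lra.
      - intros x Hx. apply continuity_pt_filterlim.
        apply (ex_derive_continuous h). eexists. apply Hder.
        apply Rabs_def1.
        + destruct (Rle_dec 0 u) as [Hle|Hle].
          * rewrite Rmax_right in Hx by auto. apply Rabs_def2 in Hu. lra.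
          * rewrite Rmax_left in Hx by lra. rewrite Rmin_right in Hx by lra. lra.
        + destruct (Rle_dec 0 u) as [Hle|Hle].
          * rewrite Rmin_left in Hx by auto. rewrite Rmax_right in Hx by auto. lra.
          * rewrite Rmin_right in Hx by lra. apply Rabs_def2 in Hu. lra.
      - lra. }
    unfold h in Hh. rewrite PSeries_0 in Hh.
    replace (1 - 0) with 1 in Hh by ring. replace (Rpower 1 s) with 1 in Hh by (unfold Rpower; rewrite ln_1, Rmult_0_r, exp_0; auto).
    assert (Hb0 : bc s 0 = 1) by (unfold bc; simpl; field).
    rewrite Hb0 in Hh.
    assert (Hv1 : 0 < 1 - u) by (apply Rabs_def2 in Hu; lra).
    rewrite Rpower_Ropp.
    assert (0 < Rpower (1 - u) s) by (unfold Rpower; apply exp_pos).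
    apply (Rmult_eq_reg_r (Rpower (1 - u) s)); [|lra].
    rewrite Hh. field. lra. }
  rewrite <- HS. apply is_pseries_R. apply PSeries_correct; auto.
Qed.


Definition ee (n : nat) : R := / (INR n + 3).

Lemma ee_pos n : 0 < ee n.
Proof. unfold ee. apply Rinv_0_lt_compat. pose proof (pos_INR n); lra. Qed.

Lemma ee_le n : ee n <= 1/3.
Proof.
  unfold ee. pose proof (pos_INR n).
  apply Rle_trans with (/ 3). apply Rinv_le_contravar; lra. lra.
Qed.

Lemma ee_S n : ee (S n) < ee n.
Proof.
  unfold ee. rewrite S_INR. pose proof (pos_INR n).
  apply Rinv_lt_contravar; [nra|lra].
Qed.

Lemma ee_lim : is_lim_seq ee 0.
Proof.
  unfold ee. replace (Finite 0) with (Rbar_inv p_infty) by reflexivity.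
  apply is_lim_seq_inv.
  - eapply is_lim_seq_plus. apply is_lim_seq_INR. apply is_lim_seq_const.
    reflexivity.
  - discriminate.
Qed.

Definition cont01 (f : R -> R) := forall t, 0 < t < 1 -> continuous f t.

Definition Iseq (f : R -> R) (n : nat) : R := RInt f (ee n) (1 - ee n).
Definition Lint (f : R -> R) : R := real (Lim_seq (Iseq f)).

Lemma cont01_exRInt f x y : cont01 f -> 0 < x < 1 -> 0 < y < 1 -> ex_RInt f x y.
Proof.
  intros Hf Hx Hy. apply (@ex_RInt_continuous R_CompleteNormedModule). intros z Hz. apply Hf.
  destruct (Rle_dec x y).
  - rewrite Rmin_left, Rmax_right in Hz by auto. lra.
  - rewrite Rmin_right, Rmax_left in Hz by lra. lra.
Qed.

Lemma Iseq_plus f g n : cont01 f -> cont01 g ->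
  Iseq (fun t => f t + g t) n = Iseq f n + Iseq g n.
Proof.
  intros Hf Hg. unfold Iseq. pose proof (ee_pos n); pose proof (ee_le n).
  apply (RInt_plus f g); apply cont01_exRInt; auto; lra.
Qed.

Lemma Iseq_scal f k n : cont01 f -> Iseq (fun t => k * f t) n = k * Iseq f n.
Proof.
  intros Hf. unfold Iseq. pose proof (ee_pos n); pose proof (ee_le n).
  apply (RInt_scal f). apply cont01_exRInt; auto; lra.
Qed.

Lemma Iseq_le f g n : cont01 f -> cont01 g -> (forall t, 0 < t < 1 -> f t <= g t) ->
  Iseq f n <= Iseq g n.
Proof.
  intros Hf Hg Hfg. unfold Iseq. pose proof (ee_pos n); pose proof (ee_le n).
  apply RInt_le; try (apply cont01_exRInt; auto; lra). lra.
  intros; apply Hfg; lra.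
Qed.

Lemma RInt_ge0 f x y : x <= y -> ex_RInt f x y -> (forall t, x < t < y -> 0 <= f t) ->
  0 <= RInt f x y.
Proof.
  intros Hxy Hex Hp.
  replace 0 with (RInt (fun _ => 0) x y).
  apply RInt_le; auto. apply ex_RInt_const.
  rewrite RInt_const. unfold scal; simpl; unfold mult; simpl. ring.
Qed.

Lemma Iseq_split f n m : cont01 f -> (n <= m)%nat ->
  Iseq f m = RInt f (ee m) (ee n) + Iseq f n + RInt f (1 - ee n) (1 - ee m).
Proof.
  intros Hf Hnm. unfold Iseq.
  pose proof (ee_pos n); pose proof (ee_le n); pose proof (ee_pos m); pose proof (ee_le m).
  assert (HC1 := RInt_Chasles f (ee m) (ee n) (1 - ee m)).
  assert (HC2 := RInt_Chasles f (ee n) (1 - ee n) (1 - ee m)).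
  unfold plus in *; simpl in *.
  rewrite <- HC1, <- HC2; try (apply cont01_exRInt; auto; lra). ring.
Qed.

Lemma ee_mono n m : (n <= m)%nat -> ee m <= ee n.
Proof.
  intros H; induction H. lra. pose proof (ee_S m); lra.
Qed.

Lemma Iseq_incr f n : cont01 f -> (forall t, 0 < t < 1 -> 0 <= f t) ->
  Iseq f n <= Iseq f (S n).
Proof.
  intros Hf Hpos. rewrite (Iseq_split f n (S n)); auto.
  pose proof (ee_pos n); pose proof (ee_le n); pose proof (ee_S n);
  pose proof (ee_pos (S n)).
  assert (0 <= RInt f (ee (S n)) (ee n)).
  { apply RInt_ge0. lra. apply cont01_exRInt; auto; lra. intros; apply Hpos; lra. }
  assert (0 <= RInt f (1 - ee n) (1 - ee (S n))).
  { apply RInt_ge0. lra. apply cont01_exRInt; auto; lra. intros; apply Hpos; lra. }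
  lra.
Qed.

Lemma incr_le_lim (u : nat -> R) (l : R) n :
  (forall k, u k <= u (S k)) -> is_lim_seq u l -> u n <= l.
Proof.
  intros Hu Hl.
  assert (Hm : forall m, u n <= u (m + n)%nat).
  { induction m. simpl; lra. simpl. specialize (Hu (m + n)%nat). lra. }
  apply is_lim_seq_incr_n with (N := n) in Hl.
  assert (Rbar_le (u n) l).
  { apply (is_lim_seq_le (fun _ => u n) (fun m => u (m + n)%nat)); auto.
    apply is_lim_seq_const. }
  simpl in H; auto.
Qed.

Lemma lim_Lint f : ex_finite_lim_seq (Iseq f) -> is_lim_seq (Iseq f) (Lint f).
Proof.
  intros [l Hl]. unfold Lint. rewrite (is_lim_seq_unique _ _ Hl). simpl; auto.
Qed.

Lemma Iseq_conv f g M : cont01 f -> cont01 g -> 0 <= M ->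
  (forall t, 0 < t < 1 -> 0 <= g t) ->
  (forall t, 0 < t < 1 -> Rabs (f t) <= M * g t) ->
  ex_finite_lim_seq (Iseq g) -> ex_finite_lim_seq (Iseq f).
Proof.
  intros Hf Hg HM Hg0 Hfg [lg Hlg].
  set (h := fun t => f t + M * g t).
  assert (Hh : cont01 h).
  { intros t Ht. unfold h. apply (continuous_plus f). apply Hf; auto.
    apply (continuous_scal_r M g). apply Hg; auto. }
  assert (Hh0 : forall t, 0 < t < 1 -> 0 <= h t).
  { intros t Ht. unfold h. specialize (Hfg t Ht). apply Rabs_le_between in Hfg. lra. }
  assert (Hgi : forall k, Iseq g k <= Iseq g (S k)) by (intros; apply Iseq_incr; auto).
  assert (Hhe : forall n, Iseq h n = Iseq f n + M * Iseq g n).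
  { intros n. unfold h. rewrite Iseq_plus; auto. rewrite Iseq_scal; auto.
    intros t Ht. apply (continuous_scal_r M g). apply Hg; auto. }
  destruct (ex_finite_lim_seq_incr (Iseq h) (2 * M * lg)) as [lh Hlh].
  - intros; apply Iseq_incr; auto.
  - intros n. rewrite Hhe.
    assert (Iseq f n <= M * Iseq g n).
    { rewrite <- Iseq_scal; auto. apply Iseq_le; auto.
      intros t Ht. apply (continuous_scal_r M g). apply Hg; auto.
      intros t Ht. specialize (Hfg t Ht). apply Rabs_le_between in Hfg. lra. }
    pose proof (incr_le_lim _ _ n Hgi Hlg). nra.
  - exists (lh - M * lg).
    apply is_lim_seq_ext with (u := fun n => Iseq h n + (- M) * Iseq g n).
    { intros n; rewrite Hhe; ring. }
    replace (lh - M * lg) with (lh + (- M) * lg) by ring.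
    apply is_lim_seq_plus'; auto. exact (is_lim_seq_scal_l _ (-M) lg Hlg).
Qed.

Definition good f := cont01 f /\ ex_finite_lim_seq (Iseq f).

Lemma Lint_plus f g : good f -> good g -> Lint (fun t => f t + g t) = Lint f + Lint g.
Proof.
  intros [Hf Hfl] [Hg Hgl].
  assert (is_lim_seq (Iseq (fun t => f t + g t)) (Lint f + Lint g)).
  { apply is_lim_seq_ext with (u := fun n => Iseq f n + Iseq g n).
    intros; rewrite Iseq_plus; auto.
    apply (is_lim_seq_plus' _ _ (Lint f) (Lint g)); apply lim_Lint; auto. }
  unfold Lint at 1. rewrite (is_lim_seq_unique _ _ H). reflexivity.
Qed.

Lemma Lint_scal f k : good f -> Lint (fun t => k * f t) = k * Lint f.
Proof.
  intros [Hf Hfl].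
  assert (is_lim_seq (Iseq (fun t => k * f t)) (k * Lint f)).
  { apply is_lim_seq_ext with (u := fun n => k * Iseq f n).
    intros; rewrite Iseq_scal; auto.
    exact (is_lim_seq_scal_l _ k (Lint f) (lim_Lint f Hfl)). }
  unfold Lint at 1. rewrite (is_lim_seq_unique _ _ H). reflexivity.
Qed.

Lemma Lint_le f g : good f -> good g -> (forall t, 0 < t < 1 -> f t <= g t) ->
  Lint f <= Lint g.
Proof.
  intros [Hf Hfl] [Hg Hgl] Hfg.
  assert (Rbar_le (Lint f) (Lint g)).
  { apply (is_lim_seq_le (Iseq f) (Iseq g)); try apply lim_Lint; auto.
    intros; apply Iseq_le; auto. }
  simpl in H; auto.
Qed.

Lemma Lint_ext f g : (forall t, 0 < t < 1 -> f t = g t) -> Lint f = Lint g.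
Proof.
  intros H. unfold Lint. f_equal. apply Lim_seq_ext. intros n. unfold Iseq.
  apply RInt_ext. intros x Hx. pose proof (ee_pos n); pose proof (ee_le n).
  rewrite Rmin_left, Rmax_right in Hx by lra. apply H; lra.
Qed.

Lemma Lint_ge_Iseq f n : good f -> (forall t, 0 < t < 1 -> 0 <= f t) -> Iseq f n <= Lint f.
Proof.
  intros [Hf Hfl] Hp. apply incr_le_lim. intros; apply Iseq_incr; auto.
  apply lim_Lint; auto.
Qed.

Definition wt (x c t : R) : R := exp ((x - 1) * ln t) * exp ((c - 1) * ln (1 - t)).

Lemma wt_pos x c t : 0 < wt x c t.
Proof. unfold wt. apply Rmult_lt_0_compat; apply exp_pos. Qed.

Lemma wt_cont x c : cont01 (wt x c).
Proof.
  intros t Ht. apply (@ex_derive_continuous R_AbsRing R_NormedModule). unfold wt. auto_derive. lra.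
Qed.

Lemma cont01_mult f g : cont01 f -> cont01 g -> cont01 (fun t => f t * g t).
Proof.
  intros Hf Hg t Ht. apply (continuous_mult f g); auto.
Qed.

Lemma exp_ln_bound y t : 0 < t -> ln t <= 0 -> y * ln t <= Rabs y * (- ln t).
Proof.
  intros Ht Hl. destruct (Rle_dec 0 y).
  - rewrite Rabs_right by lra. nra.
  - rewrite Rabs_left by lra. nra.
Qed.

Lemma lim_exp_ln_ee y : 0 < y -> is_lim_seq (fun n => exp (y * ln (ee n))) 0.
Proof.
  intros Hy.
  assert (Hln : is_lim_seq (fun n => ln (INR n + 3)) p_infty).
  { apply (is_lim_comp_seq ln (fun n => INR n + 3) p_infty p_infty).
    apply is_lim_ln_p. exists 0%nat; intros; discriminate.
    eapply is_lim_seq_plus. apply is_lim_seq_INR. apply is_lim_seq_const. reflexivity. }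
  apply is_lim_seq_le_le with (u := fun _ => 0) (w := fun n => / (1 + y * ln (INR n + 3))).
  - intros n. unfold ee. rewrite ln_Rinv by (pose proof (pos_INR n); lra).
    assert (0 <= ln (INR n + 3)).
    { rewrite <- ln_1. apply ln_le. lra. pose proof (pos_INR n); lra. }
    split. left; apply exp_pos.
    assert (1 + y * ln (INR n + 3) <= exp (y * ln (INR n + 3))) by apply exp_ineq1_le.
    replace (y * - ln (INR n + 3)) with (- (y * ln (INR n + 3))) by ring.
    rewrite exp_Ropp. apply Rinv_le_contravar. nra. auto.
  - apply is_lim_seq_const.
  - replace (Finite 0) with (Rbar_inv p_infty) by reflexivity.
    apply is_lim_seq_inv. 2: discriminate.
    eapply is_lim_seq_plus. apply is_lim_seq_const.
    eapply is_lim_seq_mult. apply is_lim_seq_const. exact Hln.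
    apply is_Rbar_mult_sym. apply is_Rbar_mult_p_infty_pos. simpl; lra.
    reflexivity.
Qed.

Lemma exp_xm1 x t : 0 < t -> exp (x * ln t) = t * exp ((x - 1) * ln t).
Proof.
  intros Ht. replace (x * ln t) with (ln t + (x - 1) * ln t) by ring.
  rewrite exp_plus, exp_ln; auto.
Qed.

Lemma is_RInt_powl x e1 e2 : 0 < x -> 0 < e1 -> 0 < e2 ->
  is_RInt (fun t => exp ((x - 1) * ln t)) e1 e2
    (exp (x * ln e2) / x - exp (x * ln e1) / x).
Proof.
  intros Hx H1 H2.
  assert (Hm : forall t, Rmin e1 e2 <= t <= Rmax e1 e2 -> 0 < t).
  { intros t Ht. destruct (Rle_dec e1 e2).
    rewrite Rmin_left in Ht; lra. rewrite Rmin_right in Ht; lra. }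
  apply (is_RInt_derive (fun t => exp (x * ln t) / x)).
  - intros t Ht. specialize (Hm t Ht). auto_derive. auto.
    rewrite (exp_xm1 x t) by auto. field. split; lra.
  - intros t Ht. specialize (Hm t Ht).
    apply (@ex_derive_continuous R_AbsRing R_NormedModule). auto_derive. auto.
Qed.

Lemma is_RInt_powr c e1 e2 : 0 < c -> e1 < 1 -> e2 < 1 ->
  is_RInt (fun t => exp ((c - 1) * ln (1 - t))) e1 e2
    (exp (c * ln (1 - e1)) / c - exp (c * ln (1 - e2)) / c).
Proof.
  intros Hc H1 H2.
  assert (Hm : forall t, Rmin e1 e2 <= t <= Rmax e1 e2 -> 0 < 1 - t).
  { intros t Ht. destruct (Rle_dec e1 e2).
    rewrite Rmax_right in Ht; lra. rewrite Rmax_left in Ht; lra. }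
  replace (exp (c * ln (1 - e1)) / c - exp (c * ln (1 - e2)) / c) with
    (minus ((fun t => - exp (c * ln (1 - t)) / c) e2) ((fun t => - exp (c * ln (1 - t)) / c) e1)).
  2:{ unfold minus, plus, opp; simpl. field. lra. }
  apply (is_RInt_derive (fun t => - exp (c * ln (1 - t)) / c)).
  - intros t Ht. specialize (Hm t Ht). auto_derive. auto.
    replace (1 + - t) with (1 - t) by ring. rewrite (exp_xm1 c (1 - t)) by auto. field. split; lra.
  - intros t Ht. specialize (Hm t Ht).
    apply (@ex_derive_continuous R_AbsRing R_NormedModule). auto_derive. auto.
Qed.

Lemma exp_le x y : x <= y -> exp x <= exp y.
Proof. intros [H|H]. left; apply exp_increasing; auto. subst; lra. Qed.

Lemma exp_ln_le1 x t : 0 <= x -> 0 < t <= 1 -> exp (x * ln t) <= 1.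
Proof.
  intros Hx Ht. rewrite <- exp_0. apply exp_le.
  assert (ln t <= 0). { rewrite <- ln_1. apply ln_le; lra. }
  nra.
Qed.

Lemma wt_bound x c t : 0 < t < 1 ->
  wt x c t <= exp (Rabs (c - 1) * ln 2) * exp ((x - 1) * ln t)
            + exp (Rabs (x - 1) * ln 2) * exp ((c - 1) * ln (1 - t)).
Proof.
  intros Ht. unfold wt.
  pose proof (exp_pos ((x - 1) * ln t)); pose proof (exp_pos ((c - 1) * ln (1 - t))).
  pose proof (exp_pos (Rabs (c - 1) * ln 2)); pose proof (exp_pos (Rabs (x - 1) * ln 2)).
  destruct (Rle_dec t (1/2)).
  - assert (exp ((c - 1) * ln (1 - t)) <= exp (Rabs (c - 1) * ln 2)).
    { apply exp_le. assert (ln (1 - t) <= 0) by (rewrite <- ln_1; apply ln_le; lra).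
      assert (- ln 2 <= ln (1 - t)).
      { rewrite <- ln_Rinv by lra. apply ln_le. apply Rinv_0_lt_compat; lra.
        replace (/ 2) with (1/2) by field. lra. }
      eapply Rle_trans. apply (exp_ln_bound (c - 1) (1 - t)); lra.
      apply Rmult_le_compat_l. apply Rabs_pos. lra. }
    nra.
  - assert (exp ((x - 1) * ln t) <= exp (Rabs (x - 1) * ln 2)).
    { apply exp_le. assert (ln t <= 0) by (rewrite <- ln_1; apply ln_le; lra).
      assert (- ln 2 <= ln t).
      { rewrite <- ln_Rinv by lra. apply ln_le. apply Rinv_0_lt_compat; lra.
        replace (/ 2) with (1/2) by field. lra. }
      eapply Rle_trans. apply (exp_ln_bound (x - 1) t); lra.
      apply Rmult_le_compat_l. apply Rabs_pos. lra. }
    nra.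
Qed.

Lemma wt_good x c : 0 < x -> 0 < c -> good (wt x c).
Proof.
  intros Hx Hc. split. apply wt_cont.
  set (K1 := exp (Rabs (c - 1) * ln 2)). set (K2 := exp (Rabs (x - 1) * ln 2)).
  apply (ex_finite_lim_seq_incr _ (K1 / x + K2 / c)).
  - intros n. apply Iseq_incr. apply wt_cont. intros; left; apply wt_pos.
  - intros n. pose proof (ee_pos n); pose proof (ee_le n).
    set (e := ee n) in *.
    assert (HI : is_RInt (fun t => K1 * exp ((x - 1) * ln t) + K2 * exp ((c - 1) * ln (1 - t)))
                  e (1 - e)
                  (K1 * (exp (x * ln (1 - e)) / x - exp (x * ln e) / x) +
                   K2 * (exp (c * ln (1 - e)) / c - exp (c * ln (1 - (1 - e))) / c))).
    { apply (is_RInt_plus (fun t => K1 * exp ((x - 1) * ln t))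
                          (fun t => K2 * exp ((c - 1) * ln (1 - t)))).
      apply (is_RInt_scal (fun t => exp ((x - 1) * ln t))). apply is_RInt_powl; lra.
      apply (is_RInt_scal (fun t => exp ((c - 1) * ln (1 - t)))). apply is_RInt_powr; lra. }
    unfold Iseq. fold e.
    eapply Rle_trans.
    apply RInt_le with (g := fun t => K1 * exp ((x - 1) * ln t) + K2 * exp ((c - 1) * ln (1 - t))).
    lra. apply cont01_exRInt; try lra. apply wt_cont.
    eexists; exact HI.
    intros t Ht. apply wt_bound. lra.
    rewrite (is_RInt_unique _ _ _ _ HI).
    assert (exp (x * ln (1 - e)) <= 1) by (apply exp_ln_le1; lra).
    assert (exp (c * ln (1 - e)) <= 1) by (apply exp_ln_le1; lra).
    pose proof (exp_pos (x * ln e)). pose proof (exp_pos (c * ln (1 - (1 - e)))).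
    assert (0 < K1) by apply exp_pos. assert (0 < K2) by apply exp_pos.
    assert (K1 * (exp (x * ln (1 - e)) / x - exp (x * ln e) / x) <= K1 / x).
    { apply Rmult_le_compat_l. lra. unfold Rdiv.
      assert (0 < / x) by (apply Rinv_0_lt_compat; lra). nra. }
    assert (K2 * (exp (c * ln (1 - e)) / c - exp (c * ln (1 - (1 - e))) / c) <= K2 / c).
    { apply Rmult_le_compat_l. lra. unfold Rdiv.
      assert (0 < / c) by (apply Rinv_0_lt_compat; lra). nra. }
    lra.
Qed.

Lemma wt_rec x c : 0 < x -> 0 < c ->
  x * Lint (wt x c) = (x + c) * Lint (wt (x + 1) c).
Proof.
  intros Hx Hc.
  set (F := fun t => exp (x * ln t) * exp (c * ln (1 - t))).
  assert (HI : forall n, x * Iseq (wt x c) n - (x + c) * Iseq (wt (x + 1) c) n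
                         = F (1 - ee n) - F (ee n)).
  { intros n. pose proof (ee_pos n); pose proof (ee_le n).
    set (e := ee n) in *.
    assert (H1 : is_RInt (fun t => x * wt x c t - (x + c) * wt (x + 1) c t) e (1 - e)
                   (minus (F (1 - e)) (F e))).
    { apply (is_RInt_derive F).
      - intros t Ht. rewrite Rmin_left, Rmax_right in Ht by lra.
        unfold F, wt. auto_derive. lra.
        replace (x + 1 - 1) with x by ring.
        replace (1 + - t) with (1 - t) by ring.
        rewrite (exp_xm1 x t) by lra. rewrite (exp_xm1 c (1 - t)) by lra.
        field. lra.
      - intros t Ht. rewrite Rmin_left, Rmax_right in Ht by lra.
        apply (@ex_derive_continuous R_AbsRing R_NormedModule). unfold wt.
        auto_derive. lra. }
    unfold Iseq. fold e.
    assert (E1 : ex_RInt (fun t => x * wt x c t) e (1 - e)).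
    { apply (ex_RInt_scal (wt x c)). apply cont01_exRInt; try lra; apply wt_cont. }
    assert (E2 : ex_RInt (fun t => (x + c) * wt (x + 1) c t) e (1 - e)).
    { apply (ex_RInt_scal (wt (x+1) c)). apply cont01_exRInt; try lra; apply wt_cont. }
    transitivity (RInt (fun t => x * wt x c t - (x + c) * wt (x + 1) c t) e (1 - e)).
    - rewrite <- (RInt_scal (wt x c)), <- (RInt_scal (wt (x + 1) c)).
      2,3: apply cont01_exRInt; try lra; apply wt_cont.
      pose proof (RInt_minus _ _ _ _ E1 E2) as HM.
      unfold minus, plus, opp in HM; simpl in HM. unfold scal; simpl; unfold mult; simpl.
      symmetry. exact HM.
    - rewrite (is_RInt_unique _ _ _ _ H1). reflexivity. }
  assert (Hlim : is_lim_seq (fun n => F (1 - ee n) - F (ee n)) 0).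
  { replace (Finite 0) with (Finite (0 - 0)) by (f_equal; ring).
    apply is_lim_seq_minus'.
    - apply is_lim_seq_le_le with (u := fun _ => 0) (w := fun n => exp (c * ln (ee n))).
      + intros n. pose proof (ee_pos n); pose proof (ee_le n). unfold F.
        replace (1 - (1 - ee n)) with (ee n) by ring.
        split. left; apply Rmult_lt_0_compat; apply exp_pos.
        pose proof (exp_pos (c * ln (ee n))).
        assert (exp (x * ln (1 - ee n)) <= 1) by (apply exp_ln_le1; lra).
        pose proof (exp_pos (x * ln (1 - ee n))). nra.
      + apply is_lim_seq_const.
      + apply lim_exp_ln_ee; auto.
    - apply is_lim_seq_le_le with (u := fun _ => 0) (w := fun n => exp (x * ln (ee n))).
      + intros n. pose proof (ee_pos n); pose proof (ee_le n). unfold F.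
        split. left; apply Rmult_lt_0_compat; apply exp_pos.
        pose proof (exp_pos (x * ln (ee n))).
        assert (exp (c * ln (1 - ee n)) <= 1) by (apply exp_ln_le1; lra).
        pose proof (exp_pos (c * ln (1 - ee n))). nra.
      + apply is_lim_seq_const.
      + apply lim_exp_ln_ee; auto. }
  assert (Hl2 : is_lim_seq (fun n => x * Iseq (wt x c) n - (x + c) * Iseq (wt (x + 1) c) n)
                  (x * Lint (wt x c) - (x + c) * Lint (wt (x + 1) c))).
  { apply is_lim_seq_minus'.
    - exact (is_lim_seq_scal_l _ x _ (lim_Lint _ (proj2 (wt_good x c Hx Hc)))).
    - exact (is_lim_seq_scal_l _ (x + c) _ (lim_Lint _ (proj2 (wt_good (x+1) c ltac:(lra) Hc)))). }
  apply is_lim_seq_ext with (v := fun n => F (1 - ee n) - F (ee n)) in Hl2; auto.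
  pose proof (is_lim_seq_unique _ _ Hl2). rewrite (is_lim_seq_unique _ _ Hlim) in H.
  injection H; intros; lra.
Qed.


Definition Cl (f : R -> R) := forall t, continuous f t.

Lemma Cl_bound f a b : Cl f -> exists M, forall t, a <= t <= b -> Rabs (f t) <= M.
Proof.
  intros Hf. destruct (Rle_dec a b) as [Hab|Hab].
  - destruct (continuity_ab_maj (fun t => Rabs (f t)) a b Hab) as [m [Hm _]].
    + intros c Hc. apply continuity_pt_filterlim.
      apply (continuous_comp f Rabs). apply Hf. apply continuous_Rabs.
    + exists (Rabs (f m)); auto.
  - exists 0. intros; lra.
Qed.

Lemma Cl_const k : Cl (fun _ => k).
Proof. intros t; apply continuous_const. Qed.
Lemma Cl_plus f g : Cl f -> Cl g -> Cl (fun t => f t + g t).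
Proof. intros Hf Hg t; apply (continuous_plus f g); auto. Qed.
Lemma Cl_mult f g : Cl f -> Cl g -> Cl (fun t => f t * g t).
Proof. intros Hf Hg t; apply (continuous_mult f g); auto. Qed.
Lemma Cl_scal k f : Cl f -> Cl (fun t => k * f t).
Proof. intros Hf; apply Cl_mult; auto; apply Cl_const. Qed.
Lemma Cl_opp f : Cl f -> Cl (fun t => - f t).
Proof. intros Hf t; apply (continuous_opp f); auto. Qed.
Lemma Cl_minus f g : Cl f -> Cl g -> Cl (fun t => f t - g t).
Proof. intros Hf Hg. apply Cl_plus; auto. apply Cl_opp; auto. Qed.
Lemma Cl_comp_scal f s : Cl f -> Cl (fun t => f (s * t)).
Proof.
  intros Hf t. apply (continuous_comp (fun t => s * t) f). 2: apply Hf.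
  apply (@ex_derive_continuous R_AbsRing R_NormedModule). auto_derive. auto.
Qed.

Record PLF (E : (R -> R) -> R) : Prop := {
  plf_plus : forall f g, Cl f -> Cl g -> E (fun t => f t + g t) = E f + E g;
  plf_scal : forall f k, Cl f -> E (fun t => k * f t) = k * E f;
  plf_le : forall f g, Cl f -> Cl g -> (forall t, 0 <= t <= 1 -> f t <= g t) -> E f <= E g;
  plf_one : E (fun _ => 1) = 1;
  plf_ext : forall f g, (forall t, 0 <= t <= 1 -> f t = g t) -> E f = E g }.

Lemma plf_const E k : PLF E -> E (fun _ => k) = k.
Proof.
  intros HE. transitivity (E (fun t => k * 1)).
  apply (plf_ext E HE); intros; ring.
  rewrite (plf_scal E HE (fun _ => 1)); [|apply Cl_const]. rewrite (plf_one E HE); ring.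
Qed.

Lemma plf_minus E f g : PLF E -> Cl f -> Cl g -> E (fun t => f t - g t) = E f - E g.
Proof.
  intros HE Hf Hg. unfold Rminus.
  rewrite (plf_plus E HE); auto. 2: apply Cl_opp; auto.
  f_equal. replace (- E g) with (-1 * E g) by ring. rewrite <- (plf_scal E HE); auto.
  apply (plf_ext E HE); intros; ring.
Qed.

Lemma plf_dist E f g eta : PLF E -> Cl f -> Cl g ->
  (forall t, 0 <= t <= 1 -> Rabs (f t - g t) <= eta) -> Rabs (E f - E g) <= eta.
Proof.
  intros HE Hf Hg H.
  rewrite <- (plf_minus E); auto.
  apply Rabs_le. split.
  - apply Rle_trans with (E (fun _ => - eta)). rewrite (plf_const E); auto; lra.
    apply (plf_le E HE). apply Cl_const. apply Cl_minus; auto.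
    intros t Ht. specialize (H t Ht). apply Rabs_le_between in H. lra.
  - apply Rle_trans with (E (fun _ => eta)). 2: rewrite (plf_const E); auto; lra.
    apply (plf_le E HE). apply Cl_minus; auto. apply Cl_const.
    intros t Ht. specialize (H t Ht). apply Rabs_le_between in H. lra.
Qed.

Lemma plf_Cl_param E f : PLF E -> Cl f -> Cl (fun s => E (fun t => f (s * t))).
Proof.
  intros HE Hf s0. apply filterlim_locally. intros eps.
  set (A := Rabs s0 + 1).
  destruct (unifcont_normed_1d f (- A) A (fun x _ => Hf x) (pos_div_2 eps)) as [d Hd].
  assert (Hd1 : 0 < Rmin d 1) by (apply Rmin_case; [apply cond_pos|lra]).
  exists (mkposreal _ Hd1). intros s Hs.
  change (Rabs (E (fun t => f (s * t)) - E (fun t => f (s0 * t))) < eps).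
  change (Rabs (s - s0) < Rmin d 1) in Hs.
  apply Rle_lt_trans with (eps / 2). 2: destruct eps; simpl; lra.
  apply plf_dist; auto; try apply Cl_comp_scal; auto.
  intros t Ht.
  assert (Hsd : Rabs (s - s0) < d) by (eapply Rlt_le_trans; [apply Hs|apply Rmin_l]).
  assert (Hs1 : Rabs (s - s0) < 1) by (eapply Rlt_le_trans; [apply Hs|apply Rmin_r]).
  assert (Hb : forall u, Rabs u <= A -> - A <= u <= A) by (intros u Hu; apply Rabs_le_between in Hu; lra).
  assert (Hst : Rabs (s * t - s0 * t) <= Rabs (s - s0)).
  { replace (s * t - s0 * t) with ((s - s0) * t) by ring. rewrite Rabs_mult.
    rewrite (Rabs_right t) by lra. pose proof (Rabs_pos (s - s0)). nra. }
  specialize (Hd (s0 * t) (s * t)).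
  assert (H1 : - A <= s0 * t <= A).
  { apply Hb. rewrite Rabs_mult, (Rabs_right t) by lra. unfold A.
    pose proof (Rabs_pos s0). nra. }
  assert (H2 : - A <= s * t <= A).
  { apply Hb. rewrite Rabs_mult, (Rabs_right t) by lra. unfold A.
    pose proof (Rabs_pos s0). pose proof (Rabs_triang_inv s s0). nra. }
  specialize (Hd H1 H2).
  assert (ball (s0 * t) d (s * t)).
  { change (Rabs (s * t - s0 * t) < d). lra. }
  specialize (Hd H). unfold ball_norm in Hd.
  change (Rabs (f (s * t) - f (s0 * t)) < eps / 2) in Hd. lra.
Qed.

Definition Ebeta (a c : R) (f : R -> R) : R :=
  Lint (fun t => f t * wt a c t) / Lint (wt a c).

Lemma Lint_wt_pos a c : 0 < a -> 0 < c -> 0 < Lint (wt a c).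
Proof.
  intros Ha Hc. apply Rlt_le_trans with (Iseq (wt a c) 0).
  - unfold Iseq. pose proof (ee_pos 0); pose proof (ee_le 0).
    apply RInt_gt_0. lra. intros; apply wt_pos.
    intros x Hx. apply wt_cont. lra.
  - apply Lint_ge_Iseq. apply wt_good; auto. intros; left; apply wt_pos.
Qed.

Lemma good_Cl a c f : 0 < a -> 0 < c -> Cl f -> good (fun t => f t * wt a c t).
Proof.
  intros Ha Hc Hf. destruct (Cl_bound f 0 1 Hf) as [M HM].
  split.
  - apply cont01_mult. intros t _; apply Hf. apply wt_cont.
  - apply (Iseq_conv _ (wt a c) (Rabs M)).
    + apply cont01_mult. intros t _; apply Hf. apply wt_cont.
    + apply wt_cont.
    + apply Rabs_pos.
    + intros; left; apply wt_pos.
    + intros t Ht. rewrite Rabs_mult, (Rabs_right (wt a c t)) by (left; apply wt_pos).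
      apply Rmult_le_compat_r. left; apply wt_pos.
      eapply Rle_trans. apply HM; lra. apply RRle_abs.
    + apply wt_good; auto.
Qed.

Lemma Ebeta_PLF a c : 0 < a -> 0 < c -> PLF (Ebeta a c).
Proof.
  intros Ha Hc. pose proof (Lint_wt_pos a c Ha Hc) as HL.
  constructor.
  - intros f g Hf Hg. unfold Ebeta.
    rewrite <- Rdiv_plus_distr. f_equal.
    rewrite <- Lint_plus; try apply good_Cl; auto.
    apply Lint_ext; intros; ring.
  - intros f k Hf. unfold Ebeta.
    replace (Lint (fun t => k * f t * wt a c t)) with (Lint (fun t => k * (f t * wt a c t))).
    rewrite Lint_scal by (apply good_Cl; auto). unfold Rdiv; ring.
    apply Lint_ext; intros; ring.
  - intros f g Hf Hg Hfg. unfold Ebeta. unfold Rdiv.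
    apply Rmult_le_compat_r. left; apply Rinv_0_lt_compat; auto.
    apply Lint_le; try apply good_Cl; auto.
    intros t Ht. apply Rmult_le_compat_r. left; apply wt_pos. apply Hfg; lra.
  - unfold Ebeta. rewrite (Lint_ext _ (wt a c)). field; lra. intros; ring.
  - intros f g Hfg. unfold Ebeta. f_equal. apply Lint_ext. intros t Ht.
    rewrite Hfg; auto; lra.
Qed.

Definition Ecomp (E1 E2 : (R -> R) -> R) (f : R -> R) : R :=
  E1 (fun s => E2 (fun t => f (s * t))).

Lemma Ecomp_PLF E1 E2 : PLF E1 -> PLF E2 -> PLF (Ecomp E1 E2).
Proof.
  intros H1 H2. unfold Ecomp. constructor.
  - intros f g Hf Hg.
    rewrite <- (plf_plus E1 H1); try apply plf_Cl_param; auto.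
    apply (plf_ext E1 H1). intros s Hs.
    apply (plf_plus E2 H2); apply Cl_comp_scal; auto.
  - intros f k Hf.
    rewrite <- (plf_scal E1 H1); try apply plf_Cl_param; auto.
    apply (plf_ext E1 H1). intros s Hs.
    apply (plf_scal E2 H2); apply Cl_comp_scal; auto.
  - intros f g Hf Hg Hfg. apply (plf_le E1 H1); try apply plf_Cl_param; auto.
    intros s Hs. apply (plf_le E2 H2); try apply Cl_comp_scal; auto.
    intros t Ht. apply Hfg. split. nra. nra.
  - transitivity (E1 (fun _ => 1)). apply (plf_ext E1 H1). intros; apply plf_one; auto.
    apply plf_one; auto.
  - intros f g Hfg. apply (plf_ext E1 H1). intros s Hs. apply (plf_ext E2 H2).
    intros t Ht. apply Hfg. split; nra.
Qed.

Lemma E0_PLF : PLF (fun f => f 1).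
Proof.
  constructor; auto. intros; apply H1; lra. intros; apply H; lra.
Qed.

Fixpoint Enest (a b : nat -> R) (m : nat) : (R -> R) -> R :=
  match m with
  | O => fun f => f 1
  | S m' => Ecomp (Ebeta (a m') (b m' - a m')) (Enest a b m')
  end.

Lemma Enest_PLF a b m : (forall k, (k < m)%nat -> 0 < a k < b k) -> PLF (Enest a b m).
Proof.
  induction m; intros H.
  - apply E0_PLF.
  - simpl. apply Ecomp_PLF.
    + destruct (H m ltac:(lia)). apply Ebeta_PLF; lra.
    + apply IHm. intros; apply H; lia.
Qed.


Lemma pow_exp_ln s n : 0 < s -> s ^ n = exp (INR n * ln s).
Proof. intros Hs. rewrite <- ln_pow by auto. rewrite exp_ln; auto. apply pow_lt; auto. Qed.

Lemma Lint_wt_shift a c n : 0 < a -> 0 < c ->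
  Lint (wt (a + INR n) c) / Lint (wt a c) = poch a n / poch (a + c) n.
Proof.
  intros Ha Hc. induction n.
  - simpl. replace (a + 0) with a by ring. field. pose proof (Lint_wt_pos a c Ha Hc); lra.
  - rewrite S_INR. simpl poch.
    pose proof (pos_INR n).
    pose proof (wt_rec (a + INR n) c ltac:(lra) Hc) as Hr.
    replace (a + INR n + 1) with (a + (INR n + 1)) in Hr by ring.
    assert (Hp1 : 0 < poch a n) by (apply poch_pos; lra).
    assert (Hp2 : 0 < poch (a + c) n) by (apply poch_pos; lra).
    pose proof (Lint_wt_pos a c Ha Hc).
    assert (Lint (wt (a + (INR n + 1)) c) = (a + INR n) / (a + INR n + c) * Lint (wt (a + INR n) c)).
    { apply (Rmult_eq_reg_l (a + INR n + c)). rewrite <- Hr. field. lra. lra. }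
    rewrite H1. unfold Rdiv at 1. rewrite Rmult_assoc. unfold Rdiv in IHn.
    rewrite IHn. field. repeat split; lra.
Qed.

Lemma Cl_pow n : Cl (fun t => t ^ n).
Proof. intros t. apply (@ex_derive_continuous R_AbsRing R_NormedModule). auto_derive; auto. Qed.

Lemma Ebeta_pow a c n : 0 < a -> 0 < c ->
  Ebeta a c (fun t => t ^ n) = poch a n / poch (a + c) n.
Proof.
  intros Ha Hc. unfold Ebeta. rewrite <- Lint_wt_shift; auto. f_equal.
  apply Lint_ext. intros t Ht. unfold wt. rewrite pow_exp_ln by lra.
  rewrite <- Rmult_assoc, <- exp_plus. f_equal. f_equal. ring.
Qed.

Lemma Enest_pow a b m n : (forall k, (k < m)%nat -> 0 < a k < b k) ->
  Enest a b m (fun t => t ^ n) = prodR m (fun k => poch (a k) n / poch (b k) n).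
Proof.
  induction m; intros H.
  - simpl. rewrite pow1. reflexivity.
  - simpl. unfold Ecomp.
    assert (HE := Enest_PLF a b m (fun k Hk => H k ltac:(lia))).
    destruct (H m ltac:(lia)) as [Ha Hb].
    rewrite <- IHm by (intros; apply H; lia).
    transitivity (Ebeta (a m) (b m - a m) (fun s => Enest a b m (fun t => t ^ n) * s ^ n)).
    + apply (plf_ext _ (Ebeta_PLF (a m) (b m - a m) Ha ltac:(lra))). intros s Hs.
      rewrite Rmult_comm, <- (plf_scal _ HE (fun t => t ^ n) (s ^ n)) by apply Cl_pow.
      apply (plf_ext _ HE). intros; rewrite Rpow_mult_distr; ring.
    + rewrite (plf_scal _ (Ebeta_PLF (a m) (b m - a m) Ha ltac:(lra))) by apply Cl_pow.
      rewrite Ebeta_pow by lra. replace (a m + (b m - a m)) with (b m) by ring. reflexivity.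
Qed.

Definition pw (d t : R) : R := if Rlt_dec 0 t then exp (d * ln t) else 0.

Lemma pw_cont d : 0 < d -> Cl (pw d).
Proof.
  intros Hd t. destruct (Rlt_dec 0 t) as [Ht|Ht].
  - apply (continuous_ext_loc _ (fun t => exp (d * ln t))).
    + exists (mkposreal t Ht). intros y Hy. change (Rabs (y - t) < t) in Hy.
      unfold pw. destruct (Rlt_dec 0 y); auto. apply Rabs_def2 in Hy; lra.
    + apply (@ex_derive_continuous R_AbsRing R_NormedModule). auto_derive; auto.
  - destruct (Req_dec t 0) as [H0|H0].
    + subst t. apply filterlim_locally. intros eps.
      assert (He : 0 < exp (ln eps / d)) by apply exp_pos.
      exists (mkposreal _ He). intros y Hy. change (Rabs (y - 0) < exp (ln eps / d)) in Hy.
      change (Rabs (pw d y - pw d 0) < eps). unfold pw.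
      destruct (Rlt_dec 0 0); [lra|]. destruct (Rlt_dec 0 y) as [Hy0|Hy0].
      * rewrite Rminus_0_r in *. rewrite Rabs_right in Hy by lra.
        rewrite Rabs_right by (left; apply exp_pos).
        replace (exp (d * ln y) - 0) with (exp (d * ln y)) by ring.
        replace (exp (d * ln y) - 0) with (exp (d * ln y)) by ring.
        assert (ln y < ln eps / d).
        { rewrite <- (ln_exp (ln eps / d)). apply ln_increasing; auto. }
        rewrite <- (exp_ln eps) by (destruct eps; auto).
        apply exp_increasing.
        apply (Rmult_lt_compat_l d) in H; auto. replace (d * (ln eps / d)) with (ln eps) in H by (field; lra).
        lra.
      * rewrite Rminus_0_r, Rabs_R0. destruct eps; auto.
    + apply (continuous_ext_loc _ (fun _ => 0)).
      * assert (Ht' : 0 < - t) by lra. exists (mkposreal _ Ht'). intros y Hy.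
        change (Rabs (y - t) < - t) in Hy. unfold pw. destruct (Rlt_dec 0 y); auto.
        apply Rabs_def2 in Hy; lra.
      * apply continuous_const.
Qed.

Lemma pw_mult d s t : 0 <= s -> 0 <= t -> pw d (s * t) = pw d s * pw d t.
Proof.
  intros Hs Ht. unfold pw.
  destruct (Rlt_dec 0 s); destruct (Rlt_dec 0 t); destruct (Rlt_dec 0 (s * t)); try nra.
  rewrite ln_mult by auto. rewrite <- exp_plus. f_equal; ring.
Qed.

Lemma pw_ge0 d t : 0 <= pw d t.
Proof. unfold pw. destruct (Rlt_dec 0 t). left; apply exp_pos. lra. Qed.

Lemma pw_mono d s t : 0 < d -> s <= t -> pw d s <= pw d t.
Proof.
  intros Hd Hst. unfold pw. destruct (Rlt_dec 0 s); destruct (Rlt_dec 0 t); try lra.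
  apply exp_le. apply Rmult_le_compat_l. lra.
  destruct (Req_dec s t). subst; lra. left; apply ln_increasing; lra.
  left; apply exp_pos.
Qed.

Lemma Ebeta_tilt a c d f : 0 < a -> 0 < c -> 0 < d -> Cl f ->
  Ebeta (a + d) c f * Ebeta a c (pw d) = Ebeta a c (fun t => pw d t * f t).
Proof.
  intros Ha Hc Hd Hf. unfold Ebeta.
  assert (E1 : Lint (fun t => pw d t * wt a c t) = Lint (wt (a + d) c)).
  { apply Lint_ext. intros t Ht. unfold pw, wt. destruct (Rlt_dec 0 t); [|lra].
    rewrite <- Rmult_assoc, <- exp_plus. f_equal. f_equal. ring. }
  assert (E2 : Lint (fun t => pw d t * f t * wt a c t) = Lint (fun t => f t * wt (a + d) c t)).
  { apply Lint_ext. intros t Ht. unfold pw, wt. destruct (Rlt_dec 0 t); [|lra].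
    replace (exp ((a + d - 1) * ln t)) with (exp (d * ln t) * exp ((a - 1) * ln t)).
    ring. rewrite <- exp_plus. f_equal. ring. }
  rewrite E1, E2. pose proof (Lint_wt_pos a c Ha Hc). pose proof (Lint_wt_pos (a + d) c ltac:(lra) Hc).
  field. split; lra.
Qed.

Lemma Enest_tilt a b m d f : (forall k, (k < m)%nat -> 0 < a k < b k) -> 0 < d -> Cl f ->
  Enest (fun k => a k + d) (fun k => b k + d) m f * Enest a b m (pw d)
  = Enest a b m (fun t => pw d t * f t).
Proof.
  revert f. induction m; intros f H Hd Hf.
  - simpl. rewrite Rmult_comm. reflexivity.
  - simpl. unfold Ecomp.
    assert (H' : forall k, (k < m)%nat -> 0 < a k < b k) by (intros; apply H; lia).
    assert (HE := Enest_PLF a b m H').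
    assert (HE' : PLF (Enest (fun k => a k + d) (fun k => b k + d) m)).
    { apply Enest_PLF. intros k Hk; specialize (H' k Hk); lra. }
    destruct (H m ltac:(lia)) as [Ha Hb].
    assert (HB := Ebeta_PLF (a m) (b m - a m) Ha ltac:(lra)).
    assert (HBd := Ebeta_PLF (a m + d) (b m - a m) ltac:(lra) ltac:(lra)).
    replace (b m + d - (a m + d)) with (b m - a m) by ring.
    set (T := Enest a b m (pw d)).
    set (g := fun s => Enest (fun k => a k + d) (fun k => b k + d) m (fun t => f (s * t))).
    assert (Hg : Cl g) by (apply plf_Cl_param; auto).
    set (h := fun s => Enest a b m (fun t => pw d t * f (s * t))).
    assert (Hh : Cl h).
    { unfold h. intros s0.
      apply (continuous_ext (fun s => g s * T)). intros s. unfold g, T.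
      apply IHm; auto. apply Cl_comp_scal; auto.
      apply (continuous_mult g (fun _ => T)). apply Hg. apply continuous_const. }
    transitivity (Ebeta (a m + d) (b m - a m) h * Ebeta (a m) (b m - a m) (pw d)).
    { transitivity (Ebeta (a m + d) (b m - a m) g * T * Ebeta (a m) (b m - a m) (pw d)).
      { assert (HT : Ebeta (a m) (b m - a m) (fun s => Enest a b m (fun t => pw d (s * t)))
                     = T * Ebeta (a m) (b m - a m) (pw d)).
        { rewrite <- (plf_scal _ HB) by (apply pw_cont; auto).
          apply (plf_ext _ HB). intros s Hs. unfold T.
          rewrite Rmult_comm, <- (plf_scal _ HE) by (apply pw_cont; auto).
          apply (plf_ext _ HE). intros t Ht. apply pw_mult; lra. }
        rewrite HT. ring. }
      f_equal.
      rewrite Rmult_comm, <- (plf_scal _ HBd) by auto.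
      apply (plf_ext _ HBd). intros s Hs. unfold g, h, T. rewrite Rmult_comm.
      apply IHm; auto. apply Cl_comp_scal; auto. }
    rewrite Ebeta_tilt; auto; try lra.
    apply (plf_ext _ HB). intros s Hs. unfold h.
    rewrite <- (plf_scal _ HE). 2: apply Cl_mult; [apply pw_cont; auto|apply Cl_comp_scal; auto].
    apply (plf_ext _ HE). intros t Ht. rewrite pw_mult by lra. ring.
Qed.


Lemma series_tail (a M : nat -> R) l L N :
  (forall n, Rabs (a n) <= M n) -> is_series a l -> is_series M L ->
  Rabs (l - sum_n a N) <= L - sum_n M N.
Proof.
  intros HaM Ha HM.
  change (is_lim_seq (sum_n a) l) in Ha. change (is_lim_seq (sum_n M) L) in HM.
  assert (Hk : forall K, Rabs (sum_n a (K + N) - sum_n a N) <= sum_n M (K + N) - sum_n M N).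
  { induction K. simpl. rewrite Rminus_diag, Rabs_R0; lra.
    replace (S K + N)%nat with (S (K + N)) by lia. rewrite !sum_Sn. unfold plus; simpl.
    replace (sum_n a (K + N) + a (S (K + N)) - sum_n a N)
      with ((sum_n a (K + N) - sum_n a N) + a (S (K + N))) by ring.
    eapply Rle_trans. apply Rabs_triang. specialize (HaM (S (K + N))). lra. }
  apply is_lim_seq_incr_n with (N := N) in Ha. apply is_lim_seq_incr_n with (N := N) in HM.
  assert (H1 : is_lim_seq (fun K => Rabs (sum_n a (K + N) - sum_n a N)) (Rabs (l - sum_n a N))).
  { apply (is_lim_seq_continuous Rabs). apply continuity_pt_filterlim, continuous_Rabs.
    apply is_lim_seq_minus'; auto. apply is_lim_seq_const. }
  assert (H2 : is_lim_seq (fun K => sum_n M (K + N) - sum_n M N) (L - sum_n M N)).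
  { apply is_lim_seq_minus'; auto. apply is_lim_seq_const. }
  pose proof (is_lim_seq_le _ _ _ _ Hk H1 H2). simpl in H. auto.
Qed.

Lemma plf_sum E (fs : nat -> R -> R) N : PLF E -> (forall n, Cl (fs n)) ->
  sum_n (fun n => E (fs n)) N = E (fun t => sum_n (fun n => fs n t) N) /\
  Cl (fun t => sum_n (fun n => fs n t) N).
Proof.
  intros HE Hf. induction N.
  - rewrite sum_O. split. apply (plf_ext E HE). intros; rewrite sum_O; auto.
    intros t. apply (continuous_ext (fs 0%nat)). intros; rewrite sum_O; auto. apply Hf.
  - destruct IHN as [IH1 IH2]. rewrite sum_Sn. unfold plus; simpl. rewrite IH1.
    assert (Cl (fun t => sum_n (fun n => fs n t) N + fs (S N) t)) by (apply Cl_plus; auto).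
    split.
    + rewrite <- (plf_plus E HE); auto. apply (plf_ext E HE). intros; rewrite sum_Sn; auto.
    + intros t. apply (continuous_ext (fun t => sum_n (fun n => fs n t) N + fs (S N) t)).
      intros; rewrite sum_Sn; auto. apply H.
Qed.

Lemma plf_series E (fs : nat -> R -> R) f (M : nat -> R) :
  PLF E -> (forall n, Cl (fs n)) -> Cl f ->
  (forall n t, 0 <= t <= 1 -> Rabs (fs n t) <= M n) -> ex_series M ->
  (forall t, 0 <= t <= 1 -> is_series (fun n => fs n t) (f t)) ->
  is_series (fun n => E (fs n)) (E f).
Proof.
  intros HE Hfs Hf HM [L HL] Hser.
  change (is_lim_seq (sum_n (fun n => E (fs n))) (E f)).
  assert (Htail : forall N, Rabs (E f - sum_n (fun n => E (fs n)) N) <= L - sum_n M N).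
  { intros N. destruct (plf_sum E fs N HE Hfs) as [H1 H2]. rewrite H1.
    apply plf_dist; auto. intros t Ht.
    apply (series_tail (fun n => fs n t) M); auto.
    }
  assert (HL' : is_lim_seq (fun N => L - sum_n M N) 0).
  { replace (Finite 0) with (Finite (L - L)) by (f_equal; ring).
    apply is_lim_seq_minus'. apply is_lim_seq_const. exact HL. }
  apply is_lim_seq_le_le with (u := fun N => E f - (L - sum_n M N))
                              (w := fun N => E f + (L - sum_n M N)).
  - intros N. specialize (Htail N). apply Rabs_le_between in Htail. lra.
  - replace (Finite (E f)) with (Finite (E f - 0)) by (f_equal; ring).
    apply is_lim_seq_minus'; auto. apply is_lim_seq_const.
  - replace (Finite (E f)) with (Finite (E f + 0)) by (f_equal; ring).
    apply is_lim_seq_plus'; auto. apply is_lim_seq_const.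
Qed.

Definition cl (t : R) : R :=
  ((1 + t - Rabs (t - 1)) / 2 + Rabs ((1 + t - Rabs (t - 1)) / 2)) / 2.

Lemma cl_id t : 0 <= t <= 1 -> cl t = t.
Proof.
  intros Ht. unfold cl. rewrite (Rabs_left1 (t - 1)) by lra.
  replace ((1 + t - - (t - 1)) / 2) with t by field.
  rewrite Rabs_right by lra. field.
Qed.

Lemma cl_range t : 0 <= cl t <= 1.
Proof.
  unfold cl. destruct (Rle_dec 1 t).
  - rewrite (Rabs_right (t - 1)) by lra.
    replace ((1 + t - (t - 1)) / 2) with 1 by field. rewrite Rabs_R1. lra.
  - rewrite (Rabs_left1 (t - 1)) by lra.
    replace ((1 + t - - (t - 1)) / 2) with t by field.
    destruct (Rle_dec 0 t). rewrite Rabs_right by lra. lra.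
    rewrite Rabs_left by lra. lra.
Qed.

Lemma Cl_cl : Cl cl.
Proof.
  intros t. unfold cl.
  assert (Hu : continuous (fun t => (1 + t - Rabs (t - 1)) / 2) t).
  { apply (continuous_scal_l (fun t => 1 + t - Rabs (t - 1)) (/ 2)) .
    apply (continuous_minus (fun t => 1 + t) (fun t => Rabs (t - 1))).
    apply (continuous_plus (fun _ => 1) (fun t => t)). apply continuous_const. apply continuous_id.
    apply (continuous_comp (fun t => t - 1) Rabs).
    apply (continuous_minus (fun t => t) (fun _ => 1)). apply continuous_id. apply continuous_const.
    apply continuous_Rabs. }
  apply (continuous_scal_l (fun t => (1 + t - Rabs (t - 1)) / 2 + Rabs ((1 + t - Rabs (t - 1)) / 2)) (/ 2)).
  apply (continuous_plus (fun t => (1 + t - Rabs (t - 1)) / 2) (fun t => Rabs ((1 + t - Rabs (t - 1)) / 2))).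
  auto. apply (continuous_comp (fun t => (1 + t - Rabs (t - 1)) / 2) Rabs). auto.
  apply continuous_Rabs.
Qed.

Lemma Cl_comp f g : Cl f -> Cl g -> Cl (fun t => g (f t)).
Proof. intros Hf Hg t. apply (continuous_comp f g); auto. Qed.

Lemma Cl_Rpower g y : Cl g -> (forall t, 0 < g t) -> Cl (fun t => Rpower (g t) y).
Proof.
  intros Hg Hp t. unfold Rpower. apply (continuous_comp g (fun x => exp (y * ln x))).
  apply Hg. apply (@ex_derive_continuous R_AbsRing R_NormedModule). auto_derive.
  apply Hp.
Qed.

Lemma one_minus_pos z t : z < 1 -> 0 <= t <= 1 -> 0 < 1 - z * t.
Proof. intros Hz Ht. destruct (Rle_dec z 0); nra. Qed.

Definition wz (s z t : R) : R := Rpower (1 - z * cl t) (- s).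

Lemma Cl_wz s z : z < 1 -> Cl (wz s z).
Proof.
  intros Hz. unfold wz. apply Cl_Rpower.
  - apply Cl_minus. apply Cl_const. apply Cl_scal. apply Cl_cl.
  - intros t. apply one_minus_pos; auto. apply cl_range.
Qed.

Definition cf (s : R) (E : (R -> R) -> R) (z0 : R) (n : nat) : R :=
  bc s n * E (fun t => cl t ^ n * Rpower (1 - z0 * cl t) (- s - INR n)).

Lemma series_gen s E z0 z rho : PLF E -> z0 < 1 -> z < 1 -> 0 <= rho < 1 ->
  (forall t, 0 <= t <= 1 -> Rabs ((z - z0) * t) <= rho * (1 - z0 * t)) ->
  is_series (fun n => cf s E z0 n * (z - z0) ^ n) (E (wz s z)).
Proof.
  intros HE Hz0 Hz Hrho Hb.
  set (g := fun n t => cl t ^ n * Rpower (1 - z0 * cl t) (- s - INR n)).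
  assert (Hg : forall n, Cl (g n)).
  { intros n. unfold g. apply Cl_mult. apply (Cl_comp cl (fun x => x ^ n)). apply Cl_cl. apply Cl_pow.
    apply Cl_Rpower. apply Cl_minus. apply Cl_const. apply Cl_scal. apply Cl_cl.
    intros t. apply one_minus_pos; auto. apply cl_range. }
  set (fs := fun n t => (bc s n * (z - z0) ^ n) * g n t).
  destruct (Cl_bound (wz s z0) 0 1 (Cl_wz s z0 Hz0)) as [K HK].
  apply is_series_ext with (a := fun n => E (fs n)).
  { intros n. change (E (fs n) = cf s E z0 n * (z - z0) ^ n). unfold fs. rewrite (plf_scal E HE) by auto. unfold cf, g. ring. }
  apply (plf_series E fs (wz s z) (fun n => Rabs (bc s n * rho ^ n) * Rabs K)); auto.
  - intros n. unfold fs. apply Cl_scal; auto.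
  - apply Cl_wz; auto.
  - intros n t Ht. unfold fs, g. rewrite (cl_id t Ht).
    assert (HD : 0 < 1 - z0 * t) by (apply one_minus_pos; auto).
    replace (Rpower (1 - z0 * t) (- s - INR n)) with
        (Rpower (1 - z0 * t) (- s) * / (1 - z0 * t) ^ n).
    2:{ replace (- s - INR n) with (- s + - INR n) by ring. rewrite Rpower_plus, (Rpower_Ropp _ (INR n)), Rpower_pow; auto. }
    specialize (HK t Ht). unfold wz in HK. rewrite (cl_id t Ht) in HK.
    replace (bc s n * (z - z0) ^ n * (t ^ n * (Rpower (1 - z0 * t) (- s) * / (1 - z0 * t) ^ n)))
      with (bc s n * (((z - z0) * t) / (1 - z0 * t)) ^ n * Rpower (1 - z0 * t) (- s)).
    2:{ unfold Rdiv. rewrite !Rpow_mult_distr. rewrite pow_inv. ring. }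
    rewrite !Rabs_mult. rewrite (Rabs_right (rho ^ n)) by (apply Rle_ge, pow_le; lra).
    apply Rmult_le_compat. apply Rmult_le_pos; apply Rabs_pos. apply Rabs_pos.
    apply Rmult_le_compat_l. apply Rabs_pos.
    rewrite <- RPow_abs. apply pow_incr. split. apply Rabs_pos.
    unfold Rdiv. rewrite Rabs_mult, Rabs_inv, (Rabs_right (1 - z0 * t)) by lra.
    specialize (Hb t Ht). apply (Rmult_le_reg_r (1 - z0 * t)); auto.
    rewrite Rmult_assoc, Rinv_l by lra. lra.
    eapply Rle_trans. apply HK. apply RRle_abs.
  - apply (ex_series_scal_r (Rabs K) (fun n => Rabs (bc s n * rho ^ n))).
    apply bc_abs_series. rewrite Rabs_right; lra.
  - intros t Ht. unfold fs, g, wz. rewrite (cl_id t Ht).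
    assert (HD : 0 < 1 - z0 * t) by (apply one_minus_pos; auto).
    set (u := (z - z0) * t / (1 - z0 * t)).
    assert (Hu : Rabs u < 1).
    { unfold u, Rdiv. rewrite Rabs_mult, Rabs_inv, (Rabs_right (1 - z0 * t)) by lra.
      specialize (Hb t Ht). apply (Rmult_lt_reg_r (1 - z0 * t)); auto.
      rewrite Rmult_assoc, Rinv_l by lra. nra. }
    pose proof (binomial_series s u Hu) as HBS.
    apply (is_series_scal_l (Rpower (1 - z0 * t) (- s))) in HBS.
    unfold scal in HBS; simpl in HBS; unfold mult in HBS; simpl in HBS.
    assert (H1u : 0 < 1 - u) by (apply Rabs_def2 in Hu; lra).
    rewrite (Rpower_mult_distr _ _ _ HD H1u) in HBS.
    replace ((1 - z0 * t) * (1 - u)) with (1 - z * t) in HBS.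
    2:{ unfold u. field. lra. }
    apply (is_series_ext _ _ _ (fun n => eq_refl _)) in HBS.
    eapply is_series_ext; [|exact HBS].
    intros n. simpl.
    replace (- s - INR n) with (- s + - INR n) by ring. rewrite Rpower_plus, (Rpower_Ropp _ (INR n)), Rpower_pow; auto.
    unfold u, Rdiv. rewrite !Rpow_mult_distr. rewrite pow_inv. ring.
Qed.


Lemma lim0_bounded (u : nat -> R) : is_lim_seq u 0 -> exists M, forall n, Rabs (u n) <= M.
Proof.
  intros Hu. apply is_lim_seq_spec in Hu.
  destruct (Hu (mkposreal 1 Rlt_0_1)) as [N HN]. simpl in HN.
  exists (1 + sum_n (fun k => Rabs (u k)) N).
  assert (Hs : forall m, 0 <= sum_n (fun k => Rabs (u k)) m).
  { induction m. rewrite sum_O. apply Rabs_pos. rewrite sum_Sn. unfold plus; simpl.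
    pose proof (Rabs_pos (u (S m))); lra. }
  intros n. destruct (Compare_dec.le_lt_dec N n) as [H|H].
  - specialize (HN n H). rewrite Rminus_0_r in HN. specialize (Hs N). lra.
  - assert (forall m, (n <= m)%nat -> Rabs (u n) <= sum_n (fun k => Rabs (u k)) m).
    { intros m Hm. induction Hm.
      - destruct n. rewrite sum_O; lra. rewrite sum_Sn; unfold plus; simpl.
        specialize (Hs n); lra.
      - rewrite sum_Sn; unfold plus; simpl. pose proof (Rabs_pos (u (S m))); lra. }
    specialize (H0 N ltac:(lia)). lra.
Qed.

Lemma coef_zero_aux (e : nat -> R) r : 0 < r ->
  (forall x, 0 < x < r -> is_series (fun j => e j * x ^ j) 0) -> e 0%nat = 0.
Proof.
  intros Hr Hs.
  set (x0 := r / 2).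
  assert (Hx0 : 0 < x0 < r) by (unfold x0; lra).
  destruct (lim0_bounded _ (ex_series_lim_0 _ (ex_intro _ 0 (Hs x0 Hx0)))) as [M HM].
  assert (Hrad : Rbar_le x0 (CV_radius e)).
  { destruct (CV_radius_bounded e) as [Hub _]. apply Hub. exists M. auto. }
  assert (Hc : continuity_pt (PSeries e) 0).
  { apply PSeries_continuity. rewrite Rabs_R0.
    destruct (CV_radius e); simpl in *; auto; lra. }
  assert (HP : forall x, 0 < x < r -> PSeries e x = 0).
  { intros x Hx. unfold PSeries. apply is_series_unique. apply (is_series_ext (fun j => e j * x ^ j)).
    intros; unfold scal; simpl; unfold mult; simpl. ring. auto. }
  rewrite <- PSeries_0. apply NNPP; intros Hne.
  assert (Hpos : 0 < Rabs (PSeries e 0) / 2) by (apply Rabs_pos_lt in Hne; lra).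
  destruct (Hc _ Hpos) as [d [Hd Hd2]].
  set (x := Rmin d x0 / 2).
  assert (Hx : 0 < x < r).
  { unfold x. assert (0 < Rmin d x0) by (apply Rmin_case; lra).
    assert (Rmin d x0 <= x0) by apply Rmin_r. lra. }
  specialize (Hd2 x). simpl in Hd2. unfold R_dist, D_x, no_cond in Hd2.
  rewrite (HP x Hx) in Hd2.
  assert (Hxd : Rabs (x - 0) < d).
  { rewrite Rminus_0_r, Rabs_right by lra. unfold x.
    assert (Rmin d x0 <= d) by apply Rmin_l. assert (0 < Rmin d x0) by (apply Rmin_case; lra). lra. }
  assert (H := Hd2 (conj (conj I (Rlt_not_eq 0 x (proj1 Hx))) Hxd)).
  rewrite Rminus_0_l, Rabs_Ropp in H. lra.
Qed.

Lemma coef_zero (d : nat -> R) r : 0 < r ->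
  (forall x, 0 < x < r -> is_series (fun n => d n * x ^ n) 0) -> forall n, d n = 0.
Proof.
  intros Hr Hs.
  assert (Hall : forall k, forall j, (j < k)%nat -> d j = 0).
  { induction k; intros j Hj. lia.
    destruct (Nat.eq_dec j k) as [->|Hne]; [|apply IHk; lia].
    replace k with (k + 0)%nat at 1 by lia. apply (coef_zero_aux (fun i => d (k + i)%nat) r Hr).
    intros x Hx. specialize (Hs x Hx).
    destruct k.
    - apply (is_series_ext (fun n => d n * x ^ n)); auto.
    - assert (Hsh : is_series (fun i => d (S k + i)%nat * x ^ (S k + i)) 0).
      { apply (is_series_incr_n (fun n => d n * x ^ n) (S k)). lia.
        assert (H0 : sum_n (fun n => d n * x ^ n) (Init.Nat.pred (S k)) = 0).
        { simpl. transitivity (sum_n (fun _ => 0) k).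
          apply sum_n_ext_loc. intros n Hn. change (d n * x ^ n = 0). rewrite (IHk n); [ring|lia].
          clear. induction k. rewrite sum_O; auto. rewrite sum_Sn, IHk. change (0 + 0 = 0). ring. }
        match goal with |- is_series _ ?l => replace l with 0 end. auto. simpl in H0. change (0 = 0 + sum_n (fun n => d n * x ^ n) k). rewrite H0. ring. }
      apply (is_series_scal_l (/ x ^ (S k))) in Hsh.
      unfold scal in Hsh; simpl in Hsh; unfold mult in Hsh; simpl in Hsh.
      rewrite Rmult_0_r in Hsh.
      eapply is_series_ext; [|exact Hsh]. intros i. simpl.
      rewrite pow_add. field. split. apply pow_nonzero; lra. lra. }
  intros n. apply (Hall (S n)). lia.
Qed.

Lemma cont_unique q s a b g1 g2 :
  is_hyp_continuation q s a b g1 -> is_hyp_continuation q s a b g2 ->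
  forall z, z < 1 -> g1 z = g2 z.
Proof.
  intros [H1a H1b] [H2a H2b] z1 Hz1.
  apply NNPP; intros Hne.
  assert (Hin : forall y, -1 < y < 1 -> g1 y = g2 y).
  { intros y Hy. specialize (H1a y Hy); specialize (H2a y Hy).
    apply is_series_unique in H1a; apply is_series_unique in H2a. congruence. }
  set (T := fun u => forall y, - u < y < 1 -> g1 y = g2 y).
  assert (HT1 : T 1) by (intros y Hy; apply Hin; lra).
  assert (Hbd : forall u, T u -> u <= - z1).
  { intros u Hu. destruct (Rle_dec u (- z1)); auto. exfalso; apply Hne. apply Hu. lra. }
  destruct (completeness T) as [U [HU1 HU2]].
  { exists (- z1). intros u Hu; apply Hbd; auto. }
  { exists 1; auto. }
  set (m := - U).
  assert (HU1' : 1 <= U) by (apply HU1; auto).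
  assert (Hright : forall y, m < y < 1 -> g1 y = g2 y).
  { intros y Hy. apply NNPP; intros Hn.
    assert (Hub : is_upper_bound T (- y)).
    { intros u Hu. destruct (Rle_dec u (- y)); auto. exfalso; apply Hn; apply Hu; lra. }
    specialize (HU2 _ Hub). unfold m in Hy. lra. }
  assert (Hm1 : m < 1) by (unfold m; lra).
  destruct (H1b m Hm1) as [r1 [Hr1 [c1 Hc1]]].
  destruct (H2b m Hm1) as [r2 [Hr2 [c2 Hc2]]].
  set (r := Rmin (Rmin r1 r2) (1 - m)).
  assert (Hr : 0 < r) by (unfold r; repeat apply Rmin_case; lra).
  assert (Hrr1 : r <= r1) by (unfold r; eapply Rle_trans; [apply Rmin_l|apply Rmin_l]).
  assert (Hrr2 : r <= r2) by (unfold r; eapply Rle_trans; [apply Rmin_l|apply Rmin_r]).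
  assert (Hrm : r <= 1 - m) by (unfold r; apply Rmin_r).
  assert (Hc : forall n, c1 n - c2 n = 0).
  { apply (coef_zero (fun n => c1 n - c2 n) r Hr). intros x Hx.
    assert (Hy : m < m + x < 1) by lra.
    assert (Hd : Rabs (m + x - m) < r) by (replace (m + x - m) with x by ring; rewrite Rabs_right; lra).
    specialize (Hc1 (m + x) ltac:(lra) ltac:(lra)). specialize (Hc2 (m + x) ltac:(lra) ltac:(lra)).
    replace (m + x - m) with x in Hc1, Hc2 by ring.
    pose proof (is_series_minus _ _ _ _ Hc1 Hc2) as HM.
    rewrite (Hright (m + x) Hy) in HM.
    replace 0 with (plus (g2 (m + x)) (opp (g2 (m + x)))).
    eapply is_series_ext; [|exact HM]. intros n. unfold plus, opp; simpl. ring.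
    unfold plus, opp; simpl. ring. }
  assert (Hleft : forall y, m - r < y <= m -> g1 y = g2 y).
  { intros y Hy.
    assert (Hd : Rabs (y - m) < r) by (rewrite Rabs_left1 by lra; lra).
    specialize (Hc1 y ltac:(lra) ltac:(lra)). specialize (Hc2 y ltac:(lra) ltac:(lra)).
    apply is_series_unique in Hc1. apply is_series_unique in Hc2.
    rewrite <- Hc1, <- Hc2. apply Series_ext. intros n. rewrite <- (Rplus_0_r (c2 n)), <- (Hc n). ring. }
  assert (HT : T (U + r / 2)).
  { intros y Hy. destruct (Rle_dec y m). apply Hleft. unfold m in *. lra.
    apply Hright. lra. }
  specialize (HU1 _ HT). lra.
Qed.


Definition valid (q : nat) (a b : nat -> R) := forall k, (k < q)%nat -> 0 < a k < b k.

Lemma Rpower_1_base y : Rpower 1 y = 1.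
Proof. unfold Rpower. rewrite ln_1, Rmult_0_r, exp_0. reflexivity. Qed.

Lemma G_is_cont q s a b : valid q a b ->
  is_hyp_continuation q s a b (fun z => Enest a b q (wz s z)).
Proof.
  intros Hv. assert (HE := Enest_PLF a b q Hv). split.
  - intros z Hz.
    assert (Hs := series_gen s (Enest a b q) 0 z (Rabs z) HE ltac:(lra) ltac:(lra)).
    assert (Hz' : 0 <= Rabs z < 1) by (split; [apply Rabs_pos|apply Rabs_def1; lra]).
    specialize (Hs Hz').
    assert (Hb : forall t, 0 <= t <= 1 -> Rabs ((z - 0) * t) <= Rabs z * (1 - 0 * t)).
    { intros t Ht. rewrite Rminus_0_r, Rabs_mult, (Rabs_right t) by lra.
      pose proof (Rabs_pos z). nra. }
    specialize (Hs Hb).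
    eapply is_series_ext; [|exact Hs]. intros n.
    change (cf s (Enest a b q) 0 n * (z - 0) ^ n = hyp_coef q s a b n * z ^ n).
    rewrite Rminus_0_r. unfold cf, hyp_coef.
    rewrite (plf_ext _ HE _ (fun t => t ^ n)).
    2:{ intros t Ht. rewrite cl_id by auto. replace (1 - 0 * t) with 1 by ring.
        rewrite Rpower_1_base. ring. }
    rewrite Enest_pow by auto. unfold bc, Rdiv. ring.
  - intros z0 Hz0.
    set (m0 := Rmin 1 (1 - z0)).
    assert (Hm0 : 0 < m0) by (unfold m0; apply Rmin_case; lra).
    assert (Hm0b : forall t, 0 <= t <= 1 -> m0 <= 1 - z0 * t).
    { intros t Ht. unfold m0. destruct (Rle_dec z0 0).
      - eapply Rle_trans. apply Rmin_l. nra.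
      - eapply Rle_trans. apply Rmin_r. nra. }
    exists (m0 / 2). split. lra.
    exists (cf s (Enest a b q) z0). intros z Hz Hz1.
    apply (series_gen s (Enest a b q) z0 z (1/2) HE Hz0 Hz1). lra.
    intros t Ht. rewrite Rabs_mult, (Rabs_right t) by lra. specialize (Hm0b t Ht).
    pose proof (Rabs_pos (z - z0)). nra.
Qed.

Lemma hypF_eq q s a b z : valid q a b -> z < 1 ->
  hypF q s a b z = Enest a b q (wz s z).
Proof.
  intros Hv Hz. unfold hypF.
  assert (HP := epsilon_spec (inhabits (fun _ : R => 0)) (is_hyp_continuation q s a b)
                  (ex_intro _ _ (G_is_cont q s a b Hv))).
  exact (cont_unique q s a b _ (fun z => Enest a b q (wz s z)) HP (G_is_cont q s a b Hv) z Hz).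
Qed.

Lemma plf_pos E f : PLF E -> Cl f -> (forall t, 0 <= t <= 1 -> 0 < f t) -> 0 < E f.
Proof.
  intros HE Hf Hp.
  destruct (continuity_ab_min f 0 1 ltac:(lra)) as [t0 [Ht0 Ht0r]].
  { intros c Hc. apply continuity_pt_filterlim. apply Hf. }
  apply Rlt_le_trans with (E (fun _ => f t0)).
  rewrite (plf_const E); auto.
  apply (plf_le E HE); auto. apply Cl_const.
Qed.

Lemma prodR_pos q g : (forall k, (k < q)%nat -> 0 < g k) -> 0 < prodR q g.
Proof.
  induction q; intros H; simpl. lra.
  apply Rmult_lt_0_compat. apply IHq; intros; apply H; lia. apply H; lia.
Qed.

Lemma Enest_pw_pos q a b d : valid q a b -> 0 < d -> 0 < Enest a b q (pw d).
Proof.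
  intros Hv Hd. assert (HE := Enest_PLF a b q Hv).
  destruct (INR_unbounded d) as [N HN].
  apply Rlt_le_trans with (Enest a b q (fun t => t ^ N)).
  - rewrite Enest_pow by auto. apply prodR_pos. intros k Hk. destruct (Hv k Hk).
    apply Rdiv_lt_0_compat; apply poch_pos; lra.
  - apply (plf_le _ HE). apply Cl_pow. apply pw_cont; auto.
    intros t Ht. unfold pw. destruct (Rlt_dec 0 t).
    + rewrite pow_exp_ln by auto. apply exp_le.
      assert (ln t <= 0) by (rewrite <- ln_1; apply ln_le; lra). nra.
    + replace t with 0 by lra. destruct N. simpl in HN. lra. simpl; lra.
Qed.

Lemma chebyshev E h g w : PLF E -> Cl h -> Cl g -> Cl w ->
  (forall s t, 0 <= s <= t -> t <= 1 -> h s <= h t) ->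
  (forall s t, 0 <= s <= t -> t <= 1 -> g t <= g s) ->
  (forall t, 0 <= t <= 1 -> 0 <= w t) -> 0 < E w ->
  E (fun t => h t * g t * w t) * E w <= E (fun t => h t * w t) * E (fun t => g t * w t).
Proof.
  intros HE Hh Hg Hw Hhm Hgm Hw0 HEw.
  set (hb := E (fun t => h t * w t) / E w).
  assert (Ht0 : exists t0, 0 <= t0 <= 1 /\
                 forall t, 0 <= t <= 1 -> (h t - hb) * (g t - g t0) <= 0).
  { destruct (classic (exists t, 0 <= t <= 1 /\ h t < hb)) as [[t1 Ht1]|Hno].
    - set (S := fun t => 0 <= t <= 1 /\ h t < hb).
      destruct (completeness S) as [t0 [Hub Hlub]].
      { exists 1. intros t Ht; apply Ht. }
      { exists t1; auto. }
      assert (Ht0a : t1 <= t0) by (apply Hub; auto).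
      assert (Ht0b : t0 <= 1) by (apply Hlub; intros t Ht; apply Ht).
      exists t0. split. lra. intros t Ht.
      destruct (Rlt_le_dec (h t) hb) as [Hlt|Hge].
      + assert (t <= t0) by (apply Hub; split; auto).
        assert (g t0 <= g t) by (apply Hgm; lra). nra.
      + destruct (Req_dec (h t) hb) as [Heq|Hne]. rewrite Heq; lra.
        assert (Hub2 : is_upper_bound S t).
        { intros s [Hs1 Hs2]. destruct (Rle_dec s t); auto.
          assert (h t <= h s) by (apply Hhm; lra). lra. }
        assert (t0 <= t) by (apply Hlub; auto).
        assert (g t <= g t0) by (apply Hgm; lra). nra.
    - exists 0. split. lra. intros t Ht.
      assert (hb <= h t) by (apply Rnot_lt_le; intros Hlt; apply Hno; exists t; auto).
      assert (g t <= g 0) by (apply Hgm; lra). nra. }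
  destruct Ht0 as [t0 [Ht0r Ht0]].
  assert (HCw : Cl (fun t => h t * w t)) by (apply Cl_mult; auto).
  assert (HCg : Cl (fun t => g t * w t)) by (apply Cl_mult; auto).
  assert (HChg : Cl (fun t => h t * g t * w t)) by (repeat apply Cl_mult; auto).
  assert (Hle : E (fun t => (h t - hb) * (g t - g t0) * w t) <= 0).
  { rewrite <- (plf_const E 0 HE). apply (plf_le E HE).
    repeat apply Cl_mult; auto; apply Cl_minus; auto; apply Cl_const. apply Cl_const.
    intros t Ht. specialize (Ht0 t Ht). specialize (Hw0 t Ht). nra. }
  assert (Hexp : E (fun t => (h t - hb) * (g t - g t0) * w t) =
     E (fun t => h t * g t * w t) - g t0 * E (fun t => h t * w t)
     - hb * E (fun t => g t * w t) + hb * g t0 * E w).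
  { rewrite (plf_ext E HE _ (fun t => ((h t * g t * w t + (- g t0) * (h t * w t))
                         + (- hb) * (g t * w t)) + (hb * g t0) * w t)).
    2: intros; ring.
    rewrite (plf_plus E HE). rewrite (plf_plus E HE). rewrite (plf_plus E HE).
    rewrite !(plf_scal E HE) by auto. ring.
    all: repeat first [apply Cl_plus | apply Cl_scal | apply Cl_mult]; auto. }
  rewrite Hexp in Hle.
  assert (Hhb : hb * E w = E (fun t => h t * w t)) by (unfold hb; field; lra).
  assert (E (fun t => h t * g t * w t) <= hb * E (fun t => g t * w t)).
  { replace (hb * g t0 * E w) with (g t0 * (hb * E w)) in Hle by ring.
    rewrite Hhb in Hle. lra. }
  apply Rmult_le_compat_r with (r := E w) in H; [|lra].
  replace (hb * E (fun t => g t * w t) * E w) with ((hb * E w) * E (fun t => g t * w t)) in H by ring.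
  rewrite Hhb in H. auto.
Qed.


Lemma one_plus_pos x t : -1 < x -> 0 < 1 + x * cl t.
Proof. intros Hx. pose proof (cl_range t). destruct (Rle_dec 0 x); nra. Qed.

Lemma Rpower_pos b y : 0 < Rpower b y.
Proof. unfold Rpower; apply exp_pos. Qed.

Lemma key_ineq q a b d s x y : valid q a b -> 0 < d -> -1 < x -> x < y ->
  let E := Enest a b q in
  let W := fun x => wz s (- x) in
  (0 < s -> E (fun t => pw d t * W y t) * E (W x) <= E (fun t => pw d t * W x t) * E (W y)) /\
  (s < 0 -> E (fun t => pw d t * W x t) * E (W y) <= E (fun t => pw d t * W y t) * E (W x)).
Proof.
  intros Hv Hd Hx Hxy E W.
  assert (HE : PLF E) by (apply Enest_PLF; auto).
  assert (HW : forall z, -1 < z -> Cl (W z)) by (intros; apply Cl_wz; lra).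
  assert (HWe : forall z t, W z t = Rpower (1 + z * cl t) (- s)).
  { intros; unfold W, wz. f_equal; ring. }
  set (g := fun t => W y t * Rpower (1 + x * cl t) s).
  assert (Hg : Cl g).
  { apply Cl_mult. apply HW; lra. apply Cl_Rpower.
    apply Cl_plus. apply Cl_const. apply Cl_scal, Cl_cl. intros; apply one_plus_pos; auto. }
  assert (HgW : forall t, g t * W x t = W y t).
  { intros t. unfold g. rewrite (HWe x t).
    rewrite Rmult_assoc, <- Rpower_plus. replace (s + - s) with 0 by ring.
    rewrite Rpower_O by (apply one_plus_pos; auto). ring. }
  assert (Hgr : forall t, 0 <= t <= 1 -> g t = Rpower ((1 + y * t) / (1 + x * t)) (- s)).
  { intros t Ht. unfold g. rewrite HWe, cl_id by auto.
    assert (0 < 1 + x * t) by (pose proof (one_plus_pos x t Hx); rewrite cl_id in H; auto).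
    assert (0 < 1 + y * t) by nra.
    unfold Rpower, Rdiv. rewrite <- exp_plus, ln_mult, ln_Rinv; auto.
    f_equal; ring. apply Rinv_0_lt_compat; auto. }
  assert (Hratio : forall u v, 0 <= u <= v -> v <= 1 ->
             0 < (1 + y * u) / (1 + x * u) <= (1 + y * v) / (1 + x * v)).
  { intros u v Huv Hv1.
    assert (0 < 1 + x * u) by (destruct (Rle_dec 0 x); nra).
    assert (0 < 1 + x * v) by (destruct (Rle_dec 0 x); nra).
    split. apply Rdiv_lt_0_compat; nra.
    apply (Rmult_le_reg_r ((1 + x * u) * (1 + x * v))). nra.
    replace ((1 + y * u) / (1 + x * u) * ((1 + x * u) * (1 + x * v))) with ((1 + y * u) * (1 + x * v)) by (field; lra).
    replace ((1 + y * v) / (1 + x * v) * ((1 + x * u) * (1 + x * v))) with ((1 + y * v) * (1 + x * u)) by (field; lra).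
    nra. }
  assert (Hh : Cl (pw d)) by (apply pw_cont; auto).
  assert (Hhm : forall u v, 0 <= u <= v -> v <= 1 -> pw d u <= pw d v).
  { intros; apply pw_mono; lra. }
  assert (HW0 : forall t, 0 <= t <= 1 -> 0 <= W x t) by (intros; rewrite HWe; left; apply Rpower_pos).
  assert (HEW : 0 < E (W x)).
  { apply plf_pos; auto. intros; rewrite HWe; apply Rpower_pos. }
  assert (E1 : E (fun t => pw d t * g t * W x t) = E (fun t => pw d t * W y t)).
  { apply (plf_ext E HE). intros; rewrite <- HgW; ring. }
  assert (E2 : E (fun t => g t * W x t) = E (W y)).
  { apply (plf_ext E HE). intros; rewrite <- HgW; ring. }
  split.
  - intros Hs.
    pose proof (chebyshev E (pw d) g (W x) HE Hh Hg (HW x Hx) Hhm) as Hc.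
    rewrite E1, E2 in Hc. apply Hc; auto.
    intros u v Huv Hv1. rewrite !Hgr by lra. destruct (Hratio u v Huv Hv1).
    rewrite !Rpower_Ropp. apply Rinv_le_contravar. apply Rpower_pos.
    apply Rle_Rpower_l; lra.
  - intros Hs.
    pose proof (chebyshev E (pw d) (fun t => - g t) (W x) HE Hh (Cl_opp _ Hg) (HW x Hx) Hhm) as Hc.
    assert (E3 : E (fun t => pw d t * - g t * W x t) = - E (fun t => pw d t * W y t)).
    { rewrite <- E1. replace (- E (fun t => pw d t * g t * W x t)) with (-1 * E (fun t => pw d t * g t * W x t)) by ring.
      rewrite <- (plf_scal E HE _ (-1)).
      apply (plf_ext E HE); intros; ring. apply Cl_mult. apply Cl_mult; auto. apply HW; lra. }
    assert (E4 : E (fun t => - g t * W x t) = - E (W y)).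
    { rewrite <- E2. replace (- E (fun t => g t * W x t)) with (-1 * E (fun t => g t * W x t)) by ring.
      rewrite <- (plf_scal E HE _ (-1)).
      apply (plf_ext E HE); intros; ring. apply Cl_mult; [exact Hg | apply HW; lra]. }
    cbv beta in Hc. rewrite E3, E4 in Hc.
    assert (Hc' : - E (fun t => pw d t * W y t) * E (W x) <=
                  E (fun t => pw d t * W x t) * - E (W y)).
    { apply Hc; auto. intros u v Huv Hv1. rewrite !Hgr by lra. destruct (Hratio u v Huv Hv1).
      apply Ropp_le_contravar. apply Rle_Rpower_l; lra. }
    lra.
Qed.

Theorem theorem1 (q : nat) (delta sigma : R) (a b : nat -> R) :
  (1 <= q)%nat -> 0 < delta -> sigma <> 0 ->
  (forall k, (k < q)%nat -> 0 < a k < b k) ->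
  let f := fun x : R =>
    hypF q sigma (fun k => a k + delta) (fun k => b k + delta) (- x)
    / hypF q sigma a b (- x) in
  (0 < sigma -> forall x y, -1 < x -> x < y -> f y <= f x) /\
  (sigma < 0 -> forall x y, -1 < x -> x < y -> f x <= f y).
Proof.
  intros Hq Hd Hs Hab f.
  assert (Hv : valid q a b) by exact Hab.
  assert (Hv' : valid q (fun k => a k + delta) (fun k => b k + delta)).
  { intros k Hk. specialize (Hab k Hk). lra. }
  set (E := Enest a b q).
  assert (HE : PLF E) by (apply Enest_PLF; auto).
  set (P := E (pw delta)).
  assert (HP : 0 < P) by (apply Enest_pw_pos; auto).
  assert (Hf : forall x, -1 < x ->
     f x = E (fun t => pw delta t * wz sigma (- x) t) / (P * E (wz sigma (- x)))).
  { intros x Hx. unfold f. rewrite !hypF_eq by (auto; lra).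
    rewrite <- (Enest_tilt a b q delta) by (auto; apply Cl_wz; lra).
    fold E P. assert (0 < E (wz sigma (- x))).
    { apply plf_pos; auto. apply Cl_wz; lra. intros; unfold wz; apply Rpower_pos. }
    field. split; lra. }
  assert (Hpos : forall x, -1 < x -> 0 < E (wz sigma (- x))).
  { intros x Hx. apply plf_pos; auto. apply Cl_wz; lra. intros; unfold wz; apply Rpower_pos. }
  assert (Hdiv : forall A C D1 D2, 0 < D1 -> 0 < D2 -> A * D2 <= C * D1 ->
             A / (P * D1) <= C / (P * D2)).
  { intros A C D1 D2 H1 H2 H.
    apply (Rmult_le_reg_r (P * D1 * D2)). apply Rmult_lt_0_compat; [apply Rmult_lt_0_compat|]; auto.
    replace (A / (P * D1) * (P * D1 * D2)) with (A * D2) by (field; split; lra).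
    replace (C / (P * D2) * (P * D1 * D2)) with (C * D1) by (field; split; lra). auto. }
  split.
  - intros Hs0 x y Hx Hxy. rewrite !Hf by lra.
    apply Hdiv; try apply Hpos; try lra.
    destruct (key_ineq q a b delta sigma x y Hv Hd Hx Hxy) as [K _]. apply K; auto.
  - intros Hs0 x y Hx Hxy. rewrite !Hf by lra.
    apply Hdiv; try apply Hpos; try lra.
    destruct (key_ineq q a b delta sigma x y Hv Hd Hx Hxy) as [_ K]. apply K; auto.
Qed.
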